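(* Let $p>0$ and, for $\lambda<1$, let $v(x;\lambda)$ be the unique $C^1(\mathbb{R})$ solution of $-v''+v-(2p+1)(p+1)\operatorname{sech}^2(px)v=\lambda v$ with $\lim_{x\to+\infty}v(x;\lambda)e^{\sqrt{1-\lambda}x}=1$. Assume that $v(\cdot;\lambda_1)$ has a simple zero at $x=x_1\in\mathbb{R}$ for some $\lambda_1\in(-\infty,1)$. Then there exists a unique $C^1$ function $\lambda\mapsto x_0(\lambda)$, defined for $\lambda$ near $\lambda_1$, such that $v(\cdot;\lambda)$ has a simple zero at $x=x_0(\lambda)$, $x_0(\lambda_1)=x_1$, and $x_0'(\lambda_1)>0$. *)

(* Defs.v *)
From Stdlib Require Import Reals.
From Coquelicot Require Import Coquelicot.
Open Scope R_scope.

Definition sech (x : R) : R := / cosh x.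

Definition solves_ode (p lam : R) (w : R -> R) : Prop :=
  forall x, ex_derive w x /\
    exists d2, is_derive (Derive w) x d2 /\
      - d2 + w x - (2*p+1)*(p+1) * (sech (p*x))^2 * w x = lam * w x.

Definition normalized_at_pinfty (lam : R) (w : R -> R) : Prop :=
  is_lim (fun x => w x * exp (sqrt (1 - lam) * x)) p_infty 1.

Definition simple_zero (w : R -> R) (x : R) : Prop :=
  ex_derive w x /\ w x = 0 /\ Derive w x <> 0.

Definition C1_on (f : R -> R) (a b : R) : Prop :=
  forall t, a < t < b -> ex_derive f t /\ continuous (Derive f) t.

(* Main.v *)
Require Import Defs.
From Stdlib Require Import Reals Lra Ranalysis5 ClassicalEpsilon.
From Coquelicot Require Import Coquelicot.
Open Scope R_scope.


Lemma isd_mult (f g : R -> R) x df dg :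
  is_derive f x df -> is_derive g x dg ->
  is_derive (fun y => f y * g y) x (df * g x + f x * dg).
Proof. intros Hf Hg. apply (is_derive_mult f g x df dg Hf Hg). intros; apply Rmult_comm. Qed.

Lemma isd_plus (f g : R -> R) x df dg :
  is_derive f x df -> is_derive g x dg ->
  is_derive (fun y => f y + g y) x (df + dg).
Proof. intros Hf Hg. apply (is_derive_plus f g x df dg Hf Hg). Qed.

Lemma isd_minus (f g : R -> R) x df dg :
  is_derive f x df -> is_derive g x dg ->
  is_derive (fun y => f y - g y) x (df - dg).
Proof. intros Hf Hg. apply (is_derive_minus f g x df dg Hf Hg). Qed.

Lemma isd_eq (f : R -> R) (x d d' : R) : is_derive f x d -> d = d' -> is_derive f x d'.
Proof. intros H ->; exact H. Qed.

Lemma isd_const (a x : R) : is_derive (fun _ => a) x 0.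
Proof. apply (is_derive_const a x). Qed.

Lemma isd_explin (a b x : R) : is_derive (fun y => exp (a*y+b)) x (a * exp (a*x+b)).
Proof. auto_derive; auto; ring. Qed.

Lemma isd_ext (f g : R -> R) x d : (forall t, f t = g t) -> is_derive f x d -> is_derive g x d.
Proof. intros H1 H2. exact (is_derive_ext f g x d H1 H2). Qed.

Lemma isd_cont (f : R -> R) (x d : R) : is_derive f x d -> continuous f x.
Proof. intros H. apply (ex_derive_continuous (V:=R_NormedModule)). exists d; exact H. Qed.

Lemma isd_cont_pt (f : R -> R) (x d : R) : is_derive f x d -> continuity_pt f x.
Proof. intros H. apply continuity_pt_filterlim. apply (isd_cont f x d H). Qed.

Lemma nondecr (f df : R -> R) a b :
  a <= b ->
  (forall x, a <= x <= b -> is_derive f x (df x)) ->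
  (forall x, a <= x <= b -> 0 <= df x) -> f a <= f b.
Proof.
  intros Hab Hd Hp. destruct (Req_dec a b) as [->|Hne]; [lra|].
  destruct (MVT_gen f a b df) as [c [Hc Heq]].
  - intros x Hx. apply Hd. rewrite Rmin_left in Hx by lra. rewrite Rmax_right in Hx by lra. lra.
  - intros x Hx. rewrite Rmin_left in Hx by lra. rewrite Rmax_right in Hx by lra.
    apply (isd_cont_pt f x (df x)). apply Hd; lra.
  - rewrite Rmin_left in Hc by lra. rewrite Rmax_right in Hc by lra.
    assert (0 <= df c * (b - a)). { apply Rmult_le_pos; [apply Hp; lra|lra]. } lra.
Qed.

Lemma const_of_deriv0 (f : R -> R) a b :
  (forall x, Rmin a b <= x <= Rmax a b -> is_derive f x 0) -> f a = f b.
Proof.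
  intros H. destruct (Rle_lt_dec a b) as [H1|H1].
  - destruct (Req_dec a b) as [->|Hne]; [reflexivity|].
    apply (eq_is_derive f a b); [|lra]. intros t Ht. apply H.
    rewrite Rmin_left by lra; rewrite Rmax_right by lra; lra.
  - symmetry. apply (eq_is_derive f b a); [|lra]. intros t Ht. apply H.
    rewrite Rmin_right by lra; rewrite Rmax_left by lra; lra.
Qed.

Lemma lim_le_gen (y L M0 : R) (F : R -> R) :
  (forall X, M0 <= X -> y <= F X) ->
  (forall eps, 0 < eps -> exists M, forall X, M <= X -> F X <= L + eps) -> y <= L.
Proof.
  intros H1 H2. apply Rnot_lt_le. intros Hlt.
  destruct (H2 ((y - L)/2)) as [M HM]; [lra|].
  specialize (H1 (Rmax M0 M) (Rmax_l _ _)). specialize (HM (Rmax M0 M) (Rmax_r _ _)). lra.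
Qed.

Lemma exp_diff_le a b : Rabs (exp a - exp b) <= exp (Rmax a b) * Rabs (a - b).
Proof.
  destruct (Rle_dec a b) as [H|H].
  - rewrite Rmax_right by lra.
    assert (E: exp a = exp b * exp (a - b)) by (rewrite <- exp_plus; f_equal; ring).
    assert (exp a <= exp b) by (destruct H as [H|H]; [left; apply exp_increasing; auto| subst; lra]).
    rewrite Rabs_left1 by lra. rewrite Rabs_left1 by lra.
    pose proof (exp_ineq1_le (a - b)). pose proof (exp_pos b). nra.
  - rewrite Rmax_left by lra.
    assert (E: exp b = exp a * exp (b - a)) by (rewrite <- exp_plus; f_equal; ring).
    assert (exp b <= exp a) by (left; apply exp_increasing; lra).
    rewrite Rabs_right by lra. rewrite Rabs_right by lra.
    pose proof (exp_ineq1_le (b - a)). pose proof (exp_pos a). nra.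
Qed.

Lemma ex_RInt_cont (f : R -> R) a b : (forall x, continuous f x) -> ex_RInt f a b.
Proof. intros H. apply (ex_RInt_continuous (V:=R_CompleteNormedModule)). intros; apply H. Qed.

Lemma RInt_deriv_upper (f : R -> R) a x : (forall t, continuous f t) ->
  is_derive (fun y => RInt f a y) x (f x).
Proof.
  intros Hc. apply (is_derive_RInt f (fun y => RInt f a y) a x).
  - apply filter_forall. intros y. apply (RInt_correct (V:=R_CompleteNormedModule)). apply ex_RInt_cont; auto.
  - apply Hc.
Qed.

Lemma cont_mult (f g : R -> R) x : continuous f x -> continuous g x -> continuous (fun y => f y * g y) x.
Proof. intros; apply (continuous_mult f g); auto. Qed.
Lemma cont_plus (f g : R -> R) x : continuous f x -> continuous g x -> continuous (fun y => f y + g y) x.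
Proof. intros; apply (continuous_plus f g); auto. Qed.
Lemma cont_minus (f g : R -> R) x : continuous f x -> continuous g x -> continuous (fun y => f y - g y) x.
Proof. intros; apply (continuous_minus f g); auto. Qed.
Lemma cont_abs (f : R -> R) x : continuous f x -> continuous (fun y => Rabs (f y)) x.
Proof. intros H. apply (continuous_comp f Rabs); auto. apply continuous_Rabs. Qed.
Lemma cont_const (a x : R) : continuous (fun _ => a) x.
Proof. apply continuous_const. Qed.
Lemma cont_explin a b x : continuous (fun y => exp (a*y+b)) x.
Proof. apply (isd_cont _ _ _ (isd_explin a b x)). Qed.


Definition qH (q Qf : R -> R) (Qb : R) : Prop :=
  (forall x, continuous q x) /\ (forall x, 0 <= q x) /\
  (forall x, is_derive Qf x (q x)) /\ (forall x, Rabs (Qf x) <= Qb) /\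
  (forall eps, 0 < eps -> exists M, forall x, M <= x -> q x <= eps).

Definition sysH (q : R -> R) (k : R) (g h : R -> R) : Prop :=
  0 < k /\ (forall x, is_derive g x (h x)) /\
  (forall x, is_derive h x (2*k*h x - q x * g x)) /\
  (forall eps, 0 < eps -> exists M, forall x, M <= x -> Rabs (g x - 1) <= eps).

Lemma h_core (q g h : R -> R) (k X0 eps : R) :
  0 < k -> 0 < eps -> (forall x, 0 <= q x) ->
  (forall x, is_derive g x (h x)) ->
  (forall x, is_derive h x (2*k*h x - q x * g x)) ->
  (forall x, X0 <= x -> Rabs (g x) <= 2 /\ q x <= eps * k) ->
  forall x, X0 <= x -> h x <= eps.
Proof.
  intros Hk He Hq Hg Hh Hb x Hx. apply Rnot_lt_le; intro Hlt.
  set (d := h x - eps).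
  assert (Hphi : forall y, x <= y ->
    (h x - eps) * exp (-2*k*x + 2*k*x) <= (h y - eps) * exp (-2*k*y + 2*k*x)).
  { intros y Hy.
    apply (nondecr (fun y => (h y - eps) * exp (-2*k*y + 2*k*x))
             (fun y => (2*k*eps - q y * g y) * exp (-2*k*y + 2*k*x))); auto.
    - intros z Hz. eapply isd_eq.
      + apply isd_mult. apply isd_minus. apply Hh. apply isd_const. apply isd_explin.
      + cbv beta; ring.
    - intros z Hz. apply Rmult_le_pos; [|left; apply exp_pos].
      destruct (Hb z ltac:(lra)) as [H1 H2]. pose proof (Hq z).
      pose proof (Rle_abs (g z)). nra. }
  assert (Hhy : forall y, x <= y -> h y >= eps + d).
  { intros y Hy. specialize (Hphi y Hy).
    replace (-2*k*x + 2*k*x) with 0 in Hphi by ring. rewrite exp_0 in Hphi.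
    assert (E1 : exp (-2*k*y + 2*k*x) <= 1).
    { rewrite <- exp_0. destruct (Req_dec y x) as [->|Hne]. right; f_equal; ring.
      left; apply exp_increasing; nra. }
    pose proof (exp_pos (-2*k*y + 2*k*x)). unfold d. nra. }
  assert (Hd : 0 < d) by (unfold d; lra).
  set (y := x + 5 / d).
  assert (Hy : x <= y) by (unfold y; assert (0 < 5/d) by (apply Rdiv_lt_0_compat; lra); lra).
  assert (Hpsi : g x - d * x <= g y - d * y).
  { apply (nondecr (fun y => g y - d * y) (fun y => h y - d)); auto.
    - intros z Hz. eapply isd_eq. apply isd_minus. apply Hg.
      apply (is_derive_scal (fun t => t) z d 1). apply (is_derive_id z). ring.
    - intros z Hz. pose proof (Hhy z ltac:(lra)). lra. }
  assert (d * y = d * x + 5) by (unfold y; field; lra).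
  destruct (Hb x Hx) as [Hx1 _]. destruct (Hb y ltac:(lra)) as [Hy1 _].
  apply Rabs_le_between in Hx1. apply Rabs_le_between in Hy1. lra.
Qed.

Lemma h_to_0 q Qf Qb k g h : qH q Qf Qb -> sysH q k g h ->
  forall eps, 0 < eps -> exists M, forall x, M <= x -> Rabs (h x) <= eps.
Proof.
  intros [Hqc [Hq0 [HQ [HQb Hql]]]] [Hk [Hg [Hh Hgl]]] eps He.
  destruct (Hgl 1 Rlt_0_1) as [M1 HM1]. destruct (Hql (eps*k)) as [M2 HM2]; [nra|].
  exists (Rmax M1 M2). intros x Hx.
  assert (Hb : forall x, Rmax M1 M2 <= x -> Rabs (g x) <= 2 /\ q x <= eps * k).
  { intros z Hz. split.
    - specialize (HM1 z ltac:(pose proof (Rmax_l M1 M2); lra)).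
      apply Rabs_le_between in HM1. apply Rabs_le_between. lra.
    - apply HM2. pose proof (Rmax_r M1 M2); lra. }
  apply Rabs_le_between. split.
  - assert (- h x <= eps); [|lra].
    apply (h_core q (fun x => - g x) (fun x => - h x) k (Rmax M1 M2) eps); auto.
    + intros z. apply (is_derive_opp g z (h z)). apply Hg.
    + intros z. eapply isd_eq. apply (is_derive_opp h z). apply Hh. simpl. unfold opp; simpl. ring.
    + intros z Hz. rewrite Rabs_Ropp. apply Hb; auto.
  - apply (h_core q g h k (Rmax M1 M2) eps); auto.
Qed.


Definition Kf (k s t : R) := (1 - exp (-2*k*t + 2*k*s)) / (2*k).

Lemma isd_K k s y : 0 < k -> is_derive (fun t => Kf k s t) y (exp (-2*k*y + 2*k*s)).
Proof. intros Hk. unfold Kf. auto_derive; auto. field. lra. Qed.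

Lemma cont_K k s y : 0 < k -> continuous (fun t => Kf k s t) y.
Proof. intros Hk. exact (isd_cont _ _ _ (isd_K k s y Hk)). Qed.

Lemma K_bounds k s t : 0 < k -> s <= t -> 0 <= Kf k s t <= 1/(2*k).
Proof.
  intros Hk Hst. unfold Kf.
  assert (E1 : exp (-2*k*t + 2*k*s) <= 1).
  { rewrite <- exp_0. destruct (Req_dec t s) as [->|Hne]. right; f_equal; ring.
    left; apply exp_increasing; nra. }
  pose proof (exp_pos (-2*k*t + 2*k*s)).
  split.
  - apply Rmult_le_pos; [lra|]. left; apply Rinv_0_lt_compat; lra.
  - unfold Rdiv. apply Rmult_le_compat_r; [left; apply Rinv_0_lt_compat; lra|lra].
Qed.

Lemma Kf_same k s : Kf k s s = 0.
Proof. unfold Kf. replace (-2*k*s + 2*k*s) with 0 by ring. rewrite exp_0. unfold Rdiv. rewrite Rminus_diag. apply Rmult_0_l. Qed.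

Lemma volt_g q k g h : (forall x, continuous q x) -> sysH q k g h ->
  forall s X, g s = g X - h X * Kf k s X - RInt (fun t => Kf k s t * q t * g t) s X.
Proof.
  intros Hqc [Hk [Hg [Hh _]]] s X.
  assert (Hc : forall t, continuous (fun t => Kf k s t * q t * g t) t).
  { intros t. apply cont_mult. apply cont_mult. apply cont_K; auto. apply Hqc.
    exact (isd_cont _ _ _ (Hg t)). }
  set (F := fun y => g y - h y * Kf k s y - RInt (fun t => Kf k s t * q t * g t) s y).
  assert (HF : F s = F X).
  { apply const_of_deriv0. intros x _. unfold F. eapply isd_eq.
    - apply isd_minus. apply isd_minus. apply Hg. apply isd_mult. apply Hh. apply isd_K; auto.
      apply RInt_deriv_upper. auto.
    - unfold Kf. field. lra. }
  unfold F in HF. rewrite Kf_same, RInt_point in HF. unfold zero in HF; simpl in HF.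
  rewrite <- HF. ring.
Qed.

Lemma volt_h q k g h : (forall x, continuous q x) -> sysH q k g h ->
  forall x X, h x = h X * exp (-2*k*X + 2*k*x) + RInt (fun t => exp (-2*k*t + 2*k*x) * q t * g t) x X.
Proof.
  intros Hqc [Hk [Hg [Hh _]]] x X.
  assert (Hc : forall t, continuous (fun t => exp (-2*k*t + 2*k*x) * q t * g t) t).
  { intros t. apply cont_mult. apply cont_mult. apply cont_explin. apply Hqc.
    exact (isd_cont _ _ _ (Hg t)). }
  set (F := fun y => h y * exp (-2*k*y + 2*k*x) + RInt (fun t => exp (-2*k*t + 2*k*x) * q t * g t) x y).
  assert (HF : F x = F X).
  { apply const_of_deriv0. intros y _. unfold F. eapply isd_eq.
    - apply isd_plus. apply isd_mult. apply Hh. apply isd_explin. apply RInt_deriv_upper. auto.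
    - cbv beta. ring. }
  unfold F in HF. rewrite RInt_point in HF. unfold zero in HF; simpl in HF.
  replace (-2*k*x + 2*k*x) with 0 in HF by ring. rewrite exp_0 in HF. rewrite <- HF. ring.
Qed.

Lemma gronwall (u B Phi : R -> R) (A s X : R) :
  s <= X -> 0 <= A -> (forall x, continuous u x) -> (forall x, continuous B x) ->
  (forall x, 0 <= B x) -> (forall x, is_derive Phi x (- B x)) ->
  (forall y, s <= y <= X -> u y <= A + RInt (fun t => B t * u t) y X) ->
  u s <= A * exp (Phi s - Phi X).
Proof.
  intros HsX HA Hu HB HB0 HPhi Hyp.
  set (f := fun t => B t * u t).
  assert (Hfc : forall t, continuous f t) by (intros; apply cont_mult; auto).
  assert (Hsw : forall y, RInt f y X = - RInt f X y).
  { intros y. rewrite <- (opp_RInt_swap f X y). reflexivity. apply ex_RInt_cont; auto. }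
  set (F := fun y => (A - RInt f X y) * exp (Phi X - Phi y)).
  assert (HF : F s <= F X).
  { apply (nondecr F (fun y => B y * exp (Phi X - Phi y) * (A - RInt f X y - u y))); auto.
    - intros y Hy. unfold F. eapply isd_eq.
      + apply isd_mult. apply isd_minus. apply isd_const. apply RInt_deriv_upper; auto.
        apply (is_derive_comp exp (fun y => Phi X - Phi y)). apply is_derive_exp.
        apply isd_minus. apply isd_const. apply HPhi.
      + unfold f, scal; simpl; unfold mult; simpl. ring.
    - intros y Hy. apply Rmult_le_pos. apply Rmult_le_pos; auto. left; apply exp_pos.
      specialize (Hyp y Hy). rewrite Hsw in Hyp. lra. }
  unfold F in HF. rewrite RInt_point in HF. unfold zero in HF; simpl in HF.
  replace (Phi X - Phi X) with 0 in HF by ring. rewrite exp_0, Rminus_0_r, Rmult_1_r in HF.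
  specialize (Hyp s (conj (Rle_refl s) HsX)). rewrite Hsw in Hyp. fold f in Hyp.
  assert (E : exp (Phi X - Phi s) * exp (Phi s - Phi X) = 1).
  { rewrite <- exp_plus. replace (Phi X - Phi s + (Phi s - Phi X)) with 0 by ring. apply exp_0. }
  pose proof (exp_pos (Phi s - Phi X)).
  assert ((A - RInt f X s) <= A * exp (Phi s - Phi X)).
  { replace (A - RInt f X s) with ((A - RInt f X s) * exp (Phi X - Phi s) * exp (Phi s - Phi X)).
    apply Rmult_le_compat_r; lra. rewrite Rmult_assoc, E. ring. }
  lra.
Qed.


Lemma ev2 (P1 P2 : R -> Prop) :
  (exists M, forall x, M <= x -> P1 x) -> (exists M, forall x, M <= x -> P2 x) ->
  exists M, forall x, M <= x -> P1 x /\ P2 x.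
Proof.
  intros [M1 H1] [M2 H2]. exists (Rmax M1 M2). intros x Hx.
  pose proof (Rmax_l M1 M2); pose proof (Rmax_r M1 M2). split; [apply H1|apply H2]; lra.
Qed.

Lemma Qb_nonneg q Qf Qb : qH q Qf Qb -> 0 <= Qb.
Proof. intros [_ [_ [_ [H _]]]]. specialize (H 0). pose proof (Rabs_pos (Qf 0)). lra. Qed.

Lemma RInt_q q Qf Qb a b : qH q Qf Qb -> RInt q a b = Qf b - Qf a.
Proof.
  intros [Hqc [_ [HQ _]]]. apply is_RInt_unique.
  apply (is_RInt_derive Qf q a b); intros; auto.
Qed.

Lemma RInt_q_le q Qf Qb a b : qH q Qf Qb -> RInt q a b <= 2 * Qb.
Proof.
  intros H. rewrite (RInt_q q Qf Qb a b H). destruct H as [_ [_ [_ [HQb _]]]].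
  pose proof (HQb a); pose proof (HQb b).
  apply Rabs_le_between in H; apply Rabs_le_between in H0. lra.
Qed.

Lemma exp_le_mono' a b : a <= b -> exp a <= exp b.
Proof. intros [H|H]; [left; apply exp_increasing; auto|subst; lra]. Qed.

Lemma Phi_deriv (Qf q : R -> R) (k x : R) : 0 < k -> is_derive Qf x (q x) ->
  is_derive (fun t => (- / (2*k)) * Qf t) x (- (q x / (2*k))).
Proof.
  intros Hk H. eapply isd_eq. apply (is_derive_scal Qf x (- / (2*k))). exact H. field. lra.
Qed.

Lemma cont_div_const (f : R -> R) c x : continuous f x -> continuous (fun t => f t / c) x.
Proof. intros H. apply (cont_mult f (fun _ => / c)); auto. apply cont_const. Qed.

Lemma exp_Phi_le (Qf : R -> R) (Qb k s X : R) : 0 < k -> (forall x, Rabs (Qf x) <= Qb) ->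
  exp ((- / (2*k)) * Qf s - (- / (2*k)) * Qf X) <= exp (Qb / k).
Proof.
  intros Hk HQb. apply exp_le_mono'.
  replace ((- / (2*k)) * Qf s - (- / (2*k)) * Qf X) with ((Qf X - Qf s) / (2 * k)) by (field; lra).
  pose proof (HQb s); pose proof (HQb X).
  apply Rabs_le_between in H; apply Rabs_le_between in H0.
  unfold Rdiv. replace (Qb * / k) with ((2*Qb) * / (2*k)) by (field; lra).
  apply Rmult_le_compat_r. left; apply Rinv_0_lt_compat; lra. lra.
Qed.


Lemma g_bound q Qf Qb k g h : qH q Qf Qb -> sysH q k g h ->
  forall s, Rabs (g s) <= exp (Qb / k).
Proof.
  intros HqH HS s. pose proof HqH as [Hqc [Hq0 [HQ [HQb Hql]]]].
  pose proof HS as [Hk [Hg [Hh Hgl]]].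
  set (E := exp (Qb / k)). assert (HE : 0 < E) by apply exp_pos.
  apply (lim_le_gen (Rabs (g s)) E s (fun X => (Rabs (g X) + Rabs (h X) / (2*k)) * E)).
  - intros X HX.
    assert (Hgc : forall x, continuous g x) by (intros x; exact (isd_cont _ _ _ (Hg x))).
    assert (Hmain : Rabs (g s) <= (Rabs (g X) + Rabs (h X) / (2*k)) *
               exp ((- / (2*k)) * Qf s - (- / (2*k)) * Qf X)).
    { apply (gronwall (fun t => Rabs (g t)) (fun t => q t / (2*k)) (fun t => (- / (2*k)) * Qf t)); auto.
      - apply Rplus_le_le_0_compat. apply Rabs_pos. apply Rmult_le_pos. apply Rabs_pos.
        left; apply Rinv_0_lt_compat; lra.
      - intros; apply cont_abs; auto.
      - intros; apply cont_div_const; auto.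
      - intros; apply Rmult_le_pos; auto. left; apply Rinv_0_lt_compat; lra.
      - intros; apply Phi_deriv; auto.
      - intros y Hy. rewrite (volt_g q k g h Hqc HS y X).
        destruct (K_bounds k y X Hk (proj2 Hy)) as [K0 K1].
        assert (HI : Rabs (RInt (fun t => Kf k y t * q t * g t) y X) <=
                     RInt (fun t => q t / (2 * k) * Rabs (g t)) y X).
        { eapply Rle_trans. apply abs_RInt_le. lra.
          apply ex_RInt_cont. intros; apply cont_mult; [apply cont_mult|]; auto. apply cont_K; auto.
          apply RInt_le. lra.
          apply ex_RInt_cont. intros; apply cont_abs; apply cont_mult; [apply cont_mult|]; auto. apply cont_K; auto.
          apply ex_RInt_cont. intros; apply cont_mult; [apply cont_div_const|apply cont_abs]; auto.
          intros t Ht. destruct (K_bounds k y t Hk ltac:(lra)) as [Kt0 Kt1].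
          rewrite !Rabs_mult. rewrite (Rabs_right (Kf k y t)) by lra. rewrite (Rabs_right (q t)) by (apply Rle_ge; auto).
          pose proof (Hq0 t). pose proof (Rabs_pos (g t)).
          unfold Rdiv. replace (q t * / (2*k) * Rabs (g t)) with (/ (2*k) * q t * Rabs (g t)) by ring.
          apply Rmult_le_compat_r; auto. apply Rmult_le_compat_r; auto. lra. }
        eapply Rle_trans. apply Rabs_triang. eapply Rle_trans. apply Rplus_le_compat_r. apply Rabs_triang.
        rewrite Rabs_Ropp, Rabs_Ropp, Rabs_mult. rewrite (Rabs_right (Kf k y X)) by lra.
        assert (Rabs (h X) * Kf k y X <= Rabs (h X) / (2*k)).
        { unfold Rdiv. apply Rmult_le_compat_l. apply Rabs_pos. lra. }
        lra. }
    eapply Rle_trans. apply Hmain. apply Rmult_le_compat_l.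
    apply Rplus_le_le_0_compat. apply Rabs_pos. apply Rmult_le_pos. apply Rabs_pos.
    left; apply Rinv_0_lt_compat; lra.
    apply exp_Phi_le; auto.
  - intros eps He. set (e1 := eps / (2 * E)).
    assert (He1 : 0 < e1) by (unfold e1; apply Rdiv_lt_0_compat; lra).
    destruct (ev2 _ _ (Hgl e1 He1) (h_to_0 q Qf Qb k g h HqH HS (2*k*e1) ltac:(nra))) as [M HM].
    exists M. intros X HX. destruct (HM X HX) as [H1 H2].
    assert (Rabs (g X) <= 1 + e1).
    { apply Rabs_le_between in H1. apply Rabs_le_between. lra. }
    assert (Rabs (h X) / (2*k) <= e1).
    { unfold Rdiv. apply (Rmult_le_reg_l (2*k)). lra. field_simplify; try lra. }
    assert (Rabs (g X) + Rabs (h X) / (2 * k) <= 1 + 2 * e1) by lra.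
    assert (e1 * E * 2 = eps) by (unfold e1; field; lra).
    nra.
Qed.


Lemma RInt_abs_bound (f g : R -> R) a b : a <= b -> (forall x, continuous f x) -> (forall x, continuous g x) ->
  (forall x, a <= x <= b -> Rabs (f x) <= g x) -> Rabs (RInt f a b) <= RInt g a b.
Proof.
  intros Hab Hf Hg H. eapply Rle_trans. apply abs_RInt_le; auto. apply ex_RInt_cont; auto.
  apply RInt_le; auto. apply ex_RInt_cont; intros; apply cont_abs; auto. apply ex_RInt_cont; auto.
  intros; apply H; lra.
Qed.

Lemma RInt_minus' (f g : R -> R) a b : (forall x, continuous f x) -> (forall x, continuous g x) ->
  RInt f a b - RInt g a b = RInt (fun t => f t - g t) a b.
Proof. intros Hf Hg. symmetry. apply (RInt_minus f g a b); apply ex_RInt_cont; auto. Qed.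

Lemma RInt_plus' (f g : R -> R) a b : (forall x, continuous f x) -> (forall x, continuous g x) ->
  RInt (fun t => f t + g t) a b = RInt f a b + RInt g a b.
Proof. intros Hf Hg. apply (RInt_plus f g a b); apply ex_RInt_cont; auto. Qed.

Lemma RInt_scal' (f : R -> R) c a b : (forall x, continuous f x) ->
  RInt (fun t => c * f t) a b = c * RInt f a b.
Proof. intros Hf. apply (RInt_scal f a b c); apply ex_RInt_cont; auto. Qed.

Lemma K_lip m k1 k2 s t : 0 < m -> m <= k1 -> m <= k2 -> s <= t ->
  Rabs (Kf k1 s t - Kf k2 s t) <= Rabs (k1 - k2) / (2 * (m * m)).
Proof.
  intros Hm H1 H2 Hst.
  set (df := fun k => ((2*k*(t-s) + 1) * exp (-2*k*t + 2*k*s) - 1) / (2*k*k)).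
  assert (Hd : forall k, 0 < k -> is_derive (fun k => Kf k s t) k (df k)).
  { intros k Hk. unfold Kf, df. auto_derive. lra. field. lra. }
  assert (Hmin : m <= Rmin k2 k1) by (apply Rmin_glb; lra).
  destruct (MVT_gen (fun k => Kf k s t) k2 k1 df) as [c [Hc Heq]].
  - intros x Hx. apply Hd. lra.
  - intros x Hx. apply (isd_cont_pt _ _ _ (Hd x ltac:(lra))).
  - assert (Hcm : m <= c) by (pose proof (Rmin_glb _ _ _ H2 H1); lra).
    rewrite Heq. rewrite Rabs_mult.
    assert (Hdf : Rabs (df c) <= / (2 * (m*m))).
    { unfold df. set (y := 2*c*(t-s)).
      replace (-2*c*t + 2*c*s) with (- y) by (unfold y; ring).
      assert (Hy : 0 <= y) by (unfold y; nra).
      pose proof (exp_ineq1_le y). assert (E : exp y * exp (- y) = 1) by (rewrite <- exp_plus; replace (y + - y) with 0 by ring; apply exp_0).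
      pose proof (exp_pos (- y)). pose proof (exp_pos y).
      assert (N1 : (y + 1) * exp (- y) <= 1) by nra.
      assert (N0 : 0 <= (y + 1) * exp (- y)) by nra.
      unfold Rdiv. rewrite Rabs_mult. rewrite Rabs_left1 by (replace (2*c*(t-s)) with y by reflexivity; lra).
      rewrite Rabs_right by (apply Rle_ge; left; apply Rinv_0_lt_compat; nra).
      replace (2*c*(t-s)) with y by reflexivity.
      apply Rle_trans with (1 * / (2*c*c)). apply Rmult_le_compat_r. left; apply Rinv_0_lt_compat; nra. lra.
      rewrite Rmult_1_l. apply Rinv_le_contravar. nra. nra. }
    replace (k1 - k2) with (- (k2 - k1)) by ring. rewrite Rabs_Ropp.
    unfold Rdiv. rewrite Rmult_comm. apply Rmult_le_compat_l. apply Rabs_pos. exact Hdf.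
Qed.

Lemma E_lip m k1 k2 x t : 0 < m -> m <= k1 -> m <= k2 -> x <= t ->
  Rabs (exp (-2*k1*t + 2*k1*x) - exp (-2*k2*t + 2*k2*x)) <= Rabs (k1 - k2) / m.
Proof.
  intros Hm H1 H2 Hxt. eapply Rle_trans. apply exp_diff_le.
  assert (Hmax : Rmax (-2*k1*t + 2*k1*x) (-2*k2*t + 2*k2*x) <= -2*m*(t-x)).
  { apply Rmax_lub; nra. }
  replace (-2*k1*t + 2*k1*x - (-2*k2*t + 2*k2*x)) with (2*(t-x)*(k2-k1)) by ring.
  rewrite Rabs_mult. rewrite (Rabs_right (2*(t-x))) by lra.
  replace (k2 - k1) with (-(k1-k2)) by ring. rewrite Rabs_Ropp.
  set (y := 2*m*(t-x)). assert (Hy : 0 <= y) by (unfold y; nra).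
  pose proof (exp_ineq1_le y). assert (E : exp y * exp (- y) = 1) by (rewrite <- exp_plus; replace (y + - y) with 0 by ring; apply exp_0).
  pose proof (exp_pos (- y)). pose proof (exp_pos y).
  assert (Hye : y * exp (- y) <= 1) by nra.
  assert (exp (Rmax (-2*k1*t + 2*k1*x) (-2*k2*t + 2*k2*x)) <= exp (- y)).
  { apply exp_le_mono'. unfold y. lra. }
  assert (2*(t-x) = y / m) by (unfold y; field; lra).
  rewrite H5. pose proof (Rabs_pos (k1 - k2)).
  assert (exp (Rmax (-2*k1*t + 2*k1*x) (-2*k2*t + 2*k2*x)) * (y / m) <= 1 / m).
  { unfold Rdiv. apply Rle_trans with (exp (-y) * (y * / m)). apply Rmult_le_compat_r.
    apply Rmult_le_pos; auto. left; apply Rinv_0_lt_compat; lra. auto.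
    replace (exp (-y) * (y * / m)) with ((y * exp (-y)) * / m) by ring.
    apply Rmult_le_compat_r. left; apply Rinv_0_lt_compat; lra. lra. }
  replace (Rabs (k1 - k2) / m) with (1 / m * Rabs (k1 - k2)) by (field; lra).
  rewrite <- Rmult_assoc. apply Rmult_le_compat_r; auto.
Qed.


Definition Lg (m Qb : R) := exp (Qb / m) * Qb / (m * m) * exp (Qb / m).
Definition Lh (m Qb : R) := 2 * Qb * (exp (Qb / m) / m + Lg m Qb).

Lemma exp_Qb_m Qb m k : 0 <= Qb -> 0 < m -> m <= k -> exp (Qb / k) <= exp (Qb / m).
Proof.
  intros HQ Hm Hk. apply exp_le_mono'. unfold Rdiv. apply Rmult_le_compat_l; auto.
  apply Rinv_le_contravar; lra.
Qed.

Lemma g_lip q Qf Qb m k1 g1 h1 k2 g2 h2 :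
  qH q Qf Qb -> sysH q k1 g1 h1 -> sysH q k2 g2 h2 -> 0 < m -> m <= k1 -> m <= k2 ->
  forall s, Rabs (g1 s - g2 s) <= Rabs (k1 - k2) * Lg m Qb.
Proof.
  intros HqH HS1 HS2 Hm Hm1 Hm2 s.
  pose proof HqH as [Hqc [Hq0 [HQ [HQb Hql]]]].
  pose proof HS1 as [Hk1 [Hg1 [Hh1 Hgl1]]]. pose proof HS2 as [Hk2 [Hg2 [Hh2 Hgl2]]].
  pose proof (Qb_nonneg _ _ _ HqH) as HQb0.
  set (G := exp (Qb / m)). assert (HG : 0 < G) by apply exp_pos.
  set (C0 := Rabs (k1 - k2) * G * Qb / (m * m)).
  assert (HC0 : 0 <= C0).
  { unfold C0, Rdiv. apply Rmult_le_pos. apply Rmult_le_pos. apply Rmult_le_pos. apply Rabs_pos. lra. lra.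
    left; apply Rinv_0_lt_compat; nra. }
  assert (Hgc1 : forall x, continuous g1 x) by (intros x; exact (isd_cont _ _ _ (Hg1 x))).
  assert (Hgc2 : forall x, continuous g2 x) by (intros x; exact (isd_cont _ _ _ (Hg2 x))).
  assert (HG2 : forall t, Rabs (g2 t) <= G).
  { intros t. eapply Rle_trans. apply (g_bound q Qf Qb k2 g2 h2 HqH HS2). apply exp_Qb_m; auto. }
  replace (Rabs (k1 - k2) * Lg m Qb) with (C0 * G) by (unfold C0, Lg, G; field; lra).
  apply (lim_le_gen _ (C0 * G) s
    (fun X => (Rabs (g1 X - g2 X) + Rabs (h1 X) / (2*k1) + Rabs (h2 X) / (2*k2) + C0) * G)).
  - intros X HX.
    assert (HA : 0 <= Rabs (g1 X - g2 X) + Rabs (h1 X) / (2*k1) + Rabs (h2 X) / (2*k2) + C0).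
    { assert (0 <= Rabs (h1 X) / (2*k1)) by (apply Rmult_le_pos; [apply Rabs_pos| left; apply Rinv_0_lt_compat; lra]).
      assert (0 <= Rabs (h2 X) / (2*k2)) by (apply Rmult_le_pos; [apply Rabs_pos| left; apply Rinv_0_lt_compat; lra]).
      pose proof (Rabs_pos (g1 X - g2 X)). lra. }
    eapply Rle_trans.
    apply (gronwall (fun t => Rabs (g1 t - g2 t)) (fun t => q t / (2*k1)) (fun t => (- / (2*k1)) * Qf t)
       (Rabs (g1 X - g2 X) + Rabs (h1 X) / (2*k1) + Rabs (h2 X) / (2*k2) + C0) s X); auto.
    + intros; apply cont_abs; apply cont_minus; auto.
    + intros; apply cont_div_const; auto.
    + intros; apply Rmult_le_pos; auto. left; apply Rinv_0_lt_compat; lra.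
    + intros; apply Phi_deriv; auto.
    + intros y Hy. rewrite (volt_g q k1 g1 h1 Hqc HS1 y X), (volt_g q k2 g2 h2 Hqc HS2 y X).
      destruct (K_bounds k1 y X Hk1 (proj2 Hy)) as [K10 K11].
      destruct (K_bounds k2 y X Hk2 (proj2 Hy)) as [K20 K21].
      set (I1 := RInt (fun t => Kf k1 y t * q t * g1 t) y X).
      set (I2 := RInt (fun t => Kf k2 y t * q t * g2 t) y X).
      assert (HI : Rabs (I1 - I2) <= RInt (fun t => q t / (2 * k1) * Rabs (g1 t - g2 t)) y X + C0).
      { unfold I1, I2. rewrite RInt_minus'.
        2,3: intros; apply cont_mult; [apply cont_mult|]; auto; apply cont_K; auto.
        eapply Rle_trans. apply (RInt_abs_bound _ (fun t => q t / (2 * k1) * Rabs (g1 t - g2 t) + (Rabs (k1 - k2) / (2 * (m*m)) * G) * q t)).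
        - lra.
        - intros; apply cont_minus; apply cont_mult; try apply cont_mult; auto; apply cont_K; auto.
        - intros; apply cont_plus. apply cont_mult. apply cont_div_const; auto. apply cont_abs; apply cont_minus; auto.
          apply cont_mult. apply cont_const. auto.
        - intros t Ht. destruct (K_bounds k1 y t Hk1 ltac:(lra)) as [Kt0 Kt1].
          pose proof (K_lip m k1 k2 y t Hm Hm1 Hm2 ltac:(lra)) as HKl.
          replace (Kf k1 y t * q t * g1 t - Kf k2 y t * q t * g2 t) with
            (Kf k1 y t * q t * (g1 t - g2 t) + (Kf k1 y t - Kf k2 y t) * q t * g2 t) by ring.
          eapply Rle_trans. apply Rabs_triang. apply Rplus_le_compat.
          + rewrite !Rabs_mult. rewrite (Rabs_right (Kf k1 y t)) by lra. rewrite (Rabs_right (q t)) by (apply Rle_ge; auto).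
            pose proof (Hq0 t). pose proof (Rabs_pos (g1 t - g2 t)).
            unfold Rdiv. replace (q t * / (2*k1) * Rabs (g1 t - g2 t)) with (/ (2*k1) * q t * Rabs (g1 t - g2 t)) by ring.
            apply Rmult_le_compat_r; auto. apply Rmult_le_compat_r; auto. lra.
          + rewrite !Rabs_mult. rewrite (Rabs_right (q t)) by (apply Rle_ge; auto).
            pose proof (Hq0 t). pose proof (Rabs_pos (g2 t)). pose proof (HG2 t).
            pose proof (Rabs_pos (Kf k1 y t - Kf k2 y t)).
            replace (Rabs (k1 - k2) / (2 * (m * m)) * G * q t) with ((Rabs (k1 - k2) / (2 * (m * m)) * q t) * G) by ring.
            apply Rle_trans with (Rabs (Kf k1 y t - Kf k2 y t) * q t * G).
            apply Rmult_le_compat_l; [apply Rmult_le_pos; auto | auto].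
            apply Rmult_le_compat_r; [lra| apply Rmult_le_compat_r; auto].
        - rewrite RInt_plus'.
          2: intros; apply cont_mult. 2: apply cont_div_const; auto. 2: apply cont_abs; apply cont_minus; auto.
          2: intros; apply cont_mult; [apply cont_const|auto].
          rewrite RInt_scal' by auto. apply Rplus_le_compat_l.
          pose proof (RInt_q_le q Qf Qb y X HqH).
          apply Rle_trans with (Rabs (k1 - k2) / (2 * (m * m)) * G * (2 * Qb)).
          apply Rmult_le_compat_l; auto. apply Rmult_le_pos; [|lra]. apply Rmult_le_pos. apply Rabs_pos.
          left; apply Rinv_0_lt_compat; nra.
          unfold C0. right. field. lra. }
      replace (g1 X - h1 X * Kf k1 y X - I1 - (g2 X - h2 X * Kf k2 y X - I2)) with
        ((g1 X - g2 X) + (- (h1 X * Kf k1 y X)) + (h2 X * Kf k2 y X) + (- (I1 - I2))) by ring.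
      eapply Rle_trans. apply Rabs_triang. eapply Rle_trans. apply Rplus_le_compat_r. apply Rabs_triang.
      eapply Rle_trans. apply Rplus_le_compat_r. apply Rplus_le_compat_r. apply Rabs_triang.
      rewrite !Rabs_Ropp, !Rabs_mult. rewrite (Rabs_right (Kf k1 y X)) by lra. rewrite (Rabs_right (Kf k2 y X)) by lra.
      assert (Rabs (h1 X) * Kf k1 y X <= Rabs (h1 X) / (2*k1)).
      { unfold Rdiv. apply Rmult_le_compat_l. apply Rabs_pos. lra. }
      assert (Rabs (h2 X) * Kf k2 y X <= Rabs (h2 X) / (2*k2)).
      { unfold Rdiv. apply Rmult_le_compat_l. apply Rabs_pos. lra. }
      lra.
    + apply Rmult_le_compat_l; auto. eapply Rle_trans. apply exp_Phi_le; auto. apply exp_Qb_m; auto.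
  - intros eps He. set (e1 := eps / (4 * G)).
    assert (He1 : 0 < e1) by (unfold e1; apply Rdiv_lt_0_compat; lra).
    destruct (ev2 _ _ (ev2 _ _ (Hgl1 e1 He1) (Hgl2 e1 He1))
       (ev2 _ _ (h_to_0 q Qf Qb k1 g1 h1 HqH HS1 (2*k1*e1) ltac:(nra))
                (h_to_0 q Qf Qb k2 g2 h2 HqH HS2 (2*k2*e1) ltac:(nra)))) as [M HM].
    exists M. intros X HX. destruct (HM X HX) as [[H1 H2] [H3 H4]].
    assert (Rabs (g1 X - g2 X) <= 2 * e1).
    { replace (g1 X - g2 X) with ((g1 X - 1) - (g2 X - 1)) by ring.
      eapply Rle_trans. apply Rabs_triang. rewrite Rabs_Ropp. lra. }
    assert (Rabs (h1 X) / (2*k1) <= e1).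
    { unfold Rdiv. apply (Rmult_le_reg_l (2*k1)). lra. field_simplify; try lra. }
    assert (Rabs (h2 X) / (2*k2) <= e1).
    { unfold Rdiv. apply (Rmult_le_reg_l (2*k2)). lra. field_simplify; try lra. }
    assert (e1 * G * 4 = eps) by (unfold e1; field; lra).
    nra.
Qed.

Lemma E_le1 k x t : 0 < k -> x <= t -> 0 < exp (-2*k*t + 2*k*x) <= 1.
Proof.
  intros Hk H. split. apply exp_pos. rewrite <- exp_0. apply exp_le_mono'. nra.
Qed.

Lemma h_lip q Qf Qb m k1 g1 h1 k2 g2 h2 :
  qH q Qf Qb -> sysH q k1 g1 h1 -> sysH q k2 g2 h2 -> 0 < m -> m <= k1 -> m <= k2 ->
  forall x, Rabs (h1 x - h2 x) <= Rabs (k1 - k2) * Lh m Qb.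
Proof.
  intros HqH HS1 HS2 Hm Hm1 Hm2 x.
  pose proof HqH as [Hqc [Hq0 [HQ [HQb Hql]]]].
  pose proof HS1 as [Hk1 [Hg1 [Hh1 Hgl1]]]. pose proof HS2 as [Hk2 [Hg2 [Hh2 Hgl2]]].
  pose proof (Qb_nonneg _ _ _ HqH) as HQb0.
  set (G := exp (Qb / m)). assert (HG : 0 < G) by apply exp_pos.
  assert (Hgc1 : forall x, continuous g1 x) by (intros y; exact (isd_cont _ _ _ (Hg1 y))).
  assert (Hgc2 : forall x, continuous g2 x) by (intros y; exact (isd_cont _ _ _ (Hg2 y))).
  assert (HG1 : forall t, Rabs (g1 t) <= G).
  { intros t. eapply Rle_trans. apply (g_bound q Qf Qb k1 g1 h1 HqH HS1). apply exp_Qb_m; auto. }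
  pose proof (g_lip q Qf Qb m k1 g1 h1 k2 g2 h2 HqH HS1 HS2 Hm Hm1 Hm2) as HgL.
  assert (HLg : 0 <= Lg m Qb).
  { unfold Lg, Rdiv. apply Rmult_le_pos; [|left; apply exp_pos]. apply Rmult_le_pos.
    apply Rmult_le_pos; [left; apply exp_pos|auto]. left; apply Rinv_0_lt_compat; nra. }
  set (C := Rabs (k1 - k2) * (G / m + Lg m Qb)).
  assert (HC : 0 <= C).
  { unfold C. apply Rmult_le_pos. apply Rabs_pos. apply Rplus_le_le_0_compat; auto.
    unfold Rdiv; apply Rmult_le_pos; [lra|left; apply Rinv_0_lt_compat; lra]. }
  apply (lim_le_gen _ (Rabs (k1 - k2) * Lh m Qb) x (fun X => Rabs (h1 X) + Rabs (h2 X) + Rabs (k1 - k2) * Lh m Qb)).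
  - intros X HX. rewrite (volt_h q k1 g1 h1 Hqc HS1 x X), (volt_h q k2 g2 h2 Hqc HS2 x X).
    destruct (E_le1 k1 x X Hk1 HX) as [E10 E11]. destruct (E_le1 k2 x X Hk2 HX) as [E20 E21].
    set (I1 := RInt (fun t => exp (-2*k1*t + 2*k1*x) * q t * g1 t) x X).
    set (I2 := RInt (fun t => exp (-2*k2*t + 2*k2*x) * q t * g2 t) x X).
    assert (HI : Rabs (I1 - I2) <= Rabs (k1 - k2) * Lh m Qb).
    { unfold I1, I2. rewrite RInt_minus'.
      2,3: intros; apply cont_mult; [apply cont_mult|]; auto; apply cont_explin.
      eapply Rle_trans. apply (RInt_abs_bound _ (fun t => C * q t)).
      - lra.
      - intros; apply cont_minus; apply cont_mult; try apply cont_mult; auto; apply cont_explin.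
      - intros; apply cont_mult. apply cont_const. auto.
      - intros t Ht. destruct (E_le1 k2 x t Hk2 ltac:(lra)) as [Et0 Et1].
        pose proof (E_lip m k1 k2 x t Hm Hm1 Hm2 ltac:(lra)) as HEl.
        replace (exp (-2*k1*t + 2*k1*x) * q t * g1 t - exp (-2*k2*t + 2*k2*x) * q t * g2 t) with
          ((exp (-2*k1*t + 2*k1*x) - exp (-2*k2*t + 2*k2*x)) * q t * g1 t + exp (-2*k2*t + 2*k2*x) * q t * (g1 t - g2 t)) by ring.
        eapply Rle_trans. apply Rabs_triang.
        rewrite !Rabs_mult. rewrite (Rabs_right (q t)) by (apply Rle_ge; auto).
        rewrite (Rabs_right (exp (-2*k2*t + 2*k2*x))) by lra.
        pose proof (Hq0 t). pose proof (HG1 t). pose proof (HgL t). pose proof (Rabs_pos (g1 t)).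
        pose proof (Rabs_pos (g1 t - g2 t)).
        pose proof (Rabs_pos (exp (-2*k1*t + 2*k1*x) - exp (-2*k2*t + 2*k2*x))).
        unfold C.
        assert (A1 : Rabs (exp (-2*k1*t + 2*k1*x) - exp (-2*k2*t + 2*k2*x)) * q t * Rabs (g1 t) <= Rabs (k1 - k2) / m * q t * G).
        { apply Rle_trans with (Rabs (exp (-2*k1*t + 2*k1*x) - exp (-2*k2*t + 2*k2*x)) * q t * G).
          apply Rmult_le_compat_l; [apply Rmult_le_pos; auto|auto].
          apply Rmult_le_compat_r; [lra|apply Rmult_le_compat_r; auto]. }
        assert (A2 : exp (-2*k2*t + 2*k2*x) * q t * Rabs (g1 t - g2 t) <= q t * (Rabs (k1 - k2) * Lg m Qb)).
        { apply Rle_trans with (1 * q t * Rabs (g1 t - g2 t)).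
          apply Rmult_le_compat_r; auto. apply Rmult_le_compat_r; auto.
          rewrite Rmult_1_l. apply Rmult_le_compat_l; auto. }
        replace (Rabs (k1 - k2) * (G / m + Lg m Qb) * q t) with
          (Rabs (k1 - k2) / m * q t * G + q t * (Rabs (k1 - k2) * Lg m Qb)) by (field; lra).
        lra.
      - rewrite RInt_scal' by auto. pose proof (RInt_q_le q Qf Qb x X HqH).
        apply Rle_trans with (C * (2 * Qb)). apply Rmult_le_compat_l; auto.
        unfold C, Lh. right. fold G. ring. }
    replace (h1 X * exp (-2*k1*X + 2*k1*x) + I1 - (h2 X * exp (-2*k2*X + 2*k2*x) + I2)) with
      (h1 X * exp (-2*k1*X + 2*k1*x) + (- (h2 X * exp (-2*k2*X + 2*k2*x))) + (I1 - I2)) by ring.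
    eapply Rle_trans. apply Rabs_triang. eapply Rle_trans. apply Rplus_le_compat_r. apply Rabs_triang.
    rewrite Rabs_Ropp, !Rabs_mult. rewrite (Rabs_right (exp (-2*k1*X + 2*k1*x))) by lra.
    rewrite (Rabs_right (exp (-2*k2*X + 2*k2*x))) by lra.
    pose proof (Rabs_pos (h1 X)). pose proof (Rabs_pos (h2 X)).
    assert (Rabs (h1 X) * exp (-2*k1*X + 2*k1*x) <= Rabs (h1 X)) by (apply Rle_trans with (Rabs (h1 X) * 1); [apply Rmult_le_compat_l|]; lra).
    assert (Rabs (h2 X) * exp (-2*k2*X + 2*k2*x) <= Rabs (h2 X)) by (apply Rle_trans with (Rabs (h2 X) * 1); [apply Rmult_le_compat_l|]; lra).
    lra.
  - intros eps He.
    destruct (ev2 _ _ (h_to_0 q Qf Qb k1 g1 h1 HqH HS1 (eps/2) ltac:(lra))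
                (h_to_0 q Qf Qb k2 g2 h2 HqH HS2 (eps/2) ltac:(lra))) as [M HM].
    exists M. intros X HX. destruct (HM X HX). lra.
Qed.


Definition cc (p : R) := (2*p+1)*(p+1).
Definition qq (p x : R) := cc p * (sech (p*x))^2.
Definition QQ (p x : R) := cc p / p * ((exp (2*p*x) - 1) / (exp (2*p*x) + 1)).

Lemma cosh_pos y : 0 < cosh y.
Proof. unfold cosh. pose proof (exp_pos y); pose proof (exp_pos (-y)). lra. Qed.

Lemma qq_alt p x : qq p x = 4 * cc p * exp (2*p*x) / (exp (2*p*x) + 1)^2.
Proof.
  unfold qq, sech, cosh. set (a := exp (p*x)).
  assert (Ha : 0 < a) by apply exp_pos.
  replace (exp (2*p*x)) with (a*a) by (unfold a; rewrite <- exp_plus; f_equal; ring).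
  replace (exp (- (p*x))) with (/ a) by (unfold a; rewrite exp_Ropp; reflexivity).
  field. split; nra.
Qed.

Lemma qH_inst p : 0 < p -> qH (qq p) (QQ p) (cc p / p).
Proof.
  intros Hp. assert (Hc : 0 < cc p) by (unfold cc; nra).
  assert (Hd : forall x, is_derive (QQ p) x (qq p x)).
  { intros x. rewrite qq_alt. unfold QQ. auto_derive.
    pose proof (exp_pos (2*p*x)); lra.
    pose proof (exp_pos (2*p*x)). field. split; lra. }
  split; [|split; [|split; [|split]]].
  - intros x. apply (isd_cont (qq p) x (4 * cc p * exp (2*p*x) * (2*p) * (1 - exp (2*p*x)) / (exp (2*p*x) + 1)^3)).
    eapply is_derive_ext. intros t. symmetry. apply qq_alt.
    auto_derive. pose proof (exp_pos (2*p*x)); nra.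
    pose proof (exp_pos (2*p*x)). field. nra.
  - intros x. unfold qq. apply Rmult_le_pos. lra. apply pow2_ge_0.
  - exact Hd.
  - intros x. unfold QQ. pose proof (exp_pos (2*p*x)).
    rewrite Rabs_mult. rewrite (Rabs_right (cc p / p)) by (apply Rle_ge; apply Rmult_le_pos; [lra|left; apply Rinv_0_lt_compat; lra]).
    rewrite <- (Rmult_1_r (cc p / p)) at 2. apply Rmult_le_compat_l.
    apply Rmult_le_pos; [lra|left; apply Rinv_0_lt_compat; lra].
    assert (Hb: -1 <= (exp (2*p*x) - 1) / (exp (2*p*x) + 1) <= 1).
    { assert (H1: (exp (2*p*x) - 1) / (exp (2*p*x) + 1) * (exp (2*p*x) + 1) = exp (2*p*x) - 1) by (field; lra).
      split; apply (Rmult_le_reg_r (exp(2*p*x)+1)); try lra; rewrite H1; lra. }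
    apply Rabs_le_between. exact Hb.
  - intros eps He. exists ((2 + 2 * cc p / eps) / p). intros x Hx.
    assert (Hpx : 2 + 2 * cc p / eps <= p * x).
    { apply (Rmult_le_compat_l p) in Hx; [|lra]. replace (p * ((2 + 2 * cc p / eps) / p)) with (2 + 2 * cc p / eps) in Hx by (field; lra). lra. }
    assert (Hce : 0 <= cc p / eps) by (apply Rmult_le_pos; [lra|left; apply Rinv_0_lt_compat; lra]).
    set (C := cosh (p*x)).
    assert (HC : (1 + p*x)/2 <= C).
    { unfold C, cosh. pose proof (exp_ineq1_le (p*x)). pose proof (exp_pos (-(p*x))). lra. }
    assert (HC1 : 1 <= C) by lra. assert (HC2 : cc p / eps <= C) by lra.
    unfold qq, sech. fold C. simpl. rewrite Rmult_1_r.
    assert (cc p <= eps * (C * C)).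
    { assert (E: cc p = eps * (cc p / eps)) by (field; lra).
      assert (eps * (cc p / eps) <= eps * C) by (apply Rmult_le_compat_l; lra).
      assert (eps * C <= eps * (C * C)) by (apply Rmult_le_compat_l; nra). lra. }
    assert (0 < C * C) by nra.
    replace (cc p * (/ C * / C)) with (cc p / (C * C)) by (field; lra).
    assert (H2: cc p / (C * C) * (C * C) = cc p) by (field; lra).
    apply (Rmult_le_reg_r (C*C)); auto. rewrite H2. lra.
Qed.


Definition Hv (p : R) (v : R -> R -> R) := forall lam, lam < 1 ->
  solves_ode p lam (fun x => v x lam) /\ normalized_at_pinfty lam (fun x => v x lam).

Definition kk (lam : R) := sqrt (1 - lam).
Definition gg (v : R -> R -> R) lam x := v x lam * exp (kk lam * x).
Definition dv (v : R -> R -> R) lam x := Derive (fun y => v y lam) x.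
Definition hh (v : R -> R -> R) lam x := (dv v lam x + kk lam * v x lam) * exp (kk lam * x).

Lemma kk_pos lam : lam < 1 -> 0 < kk lam.
Proof. intros H. unfold kk. apply sqrt_lt_R0. lra. Qed.

Lemma kk_sq lam : lam < 1 -> kk lam * kk lam = 1 - lam.
Proof. intros H. unfold kk. apply sqrt_sqrt. lra. Qed.

Lemma v_d1 p v lam x : Hv p v -> lam < 1 -> is_derive (fun y => v y lam) x (dv v lam x).
Proof. intros H Hl. destruct (H lam Hl) as [Hs _]. destruct (Hs x) as [Hd _]. apply Derive_correct. exact Hd. Qed.

Lemma v_d2 p v lam x : Hv p v -> lam < 1 -> is_derive (dv v lam) x ((1 - lam - qq p x) * v x lam).
Proof.
  intros H Hl. destruct (H lam Hl) as [Hs _]. destruct (Hs x) as [_ [d2 [Hd2 Heq]]].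
  unfold dv. eapply isd_eq. exact Hd2. unfold qq, cc. lra.
Qed.

Lemma isd_explin0 (a x : R) : is_derive (fun y => exp (a*y)) x (a * exp (a*x)).
Proof. auto_derive; auto; ring. Qed.

Lemma sys_inst p v lam : 0 < p -> Hv p v -> lam < 1 -> sysH (qq p) (kk lam) (gg v lam) (hh v lam).
Proof.
  intros Hp H Hl. pose proof (kk_pos lam Hl) as Hk. pose proof (kk_sq lam Hl) as Hk2.
  split; [exact Hk|split; [|split]].
  - intros x. unfold gg, hh. eapply isd_eq. apply isd_mult. apply (v_d1 p v lam x H Hl).
    apply isd_explin0. cbv beta. ring.
  - intros x. unfold hh, gg. eapply isd_eq. apply isd_mult. apply isd_plus.
    apply (v_d2 p v lam x H Hl). apply (is_derive_scal (fun y => v y lam)). apply (v_d1 p v lam x H Hl).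
    apply isd_explin0.
    cbv beta. replace (1 - lam) with (kk lam * kk lam) by lra. ring.
  - destruct (H lam Hl) as [_ Hn]. unfold normalized_at_pinfty in Hn.
    apply is_lim_spec in Hn. intros eps He. destruct (Hn (mkposreal eps He)) as [M HM].
    exists (M + 1). intros x Hx. left. apply (HM x). lra.
Qed.

Lemma v_eq_g v lam x : lam < 1 -> v x lam = gg v lam x * exp (- kk lam * x).
Proof.
  intros Hl. unfold gg. rewrite Rmult_assoc, <- exp_plus.
  replace (kk lam * x + - kk lam * x) with 0 by ring. rewrite exp_0. ring.
Qed.

Lemma dv_eq_h v lam x : lam < 1 -> dv v lam x = hh v lam x * exp (- kk lam * x) - kk lam * v x lam.
Proof.
  intros Hl. unfold hh. rewrite Rmult_assoc, <- exp_plus.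
  replace (kk lam * x + - kk lam * x) with 0 by ring. rewrite exp_0. ring.
Qed.


Definition JC (F : R -> R -> R) x0 l0 := forall eps, 0 < eps -> exists d, 0 < d /\
  forall x l, Rabs (x - x0) < d -> Rabs (l - l0) < d -> Rabs (F x l - F x0 l0) < eps.

Lemma cont_eps (f : R -> R) x : continuity_pt f x ->
  forall eps, 0 < eps -> exists d, 0 < d /\ forall y, Rabs (y - x) < d -> Rabs (f y - f x) < eps.
Proof.
  intros H eps He. apply continuity_pt_locally with (eps := mkposreal eps He) in H.
  destruct H as [d Hd]. exists d. split. apply cond_pos. intros y Hy. apply Hd. exact Hy.
Qed.

Lemma JC_plus F G x0 l0 : JC F x0 l0 -> JC G x0 l0 -> JC (fun x l => F x l + G x l) x0 l0.
Proof.
  intros HF HG eps He. destruct (HF (eps/2)) as [d1 [Hd1 H1]]; [lra|].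
  destruct (HG (eps/2)) as [d2 [Hd2 H2]]; [lra|].
  exists (Rmin d1 d2). split. apply Rmin_pos; auto. intros x l Hx Hl.
  pose proof (Rmin_l d1 d2). pose proof (Rmin_r d1 d2).
  specialize (H1 x l ltac:(lra) ltac:(lra)). specialize (H2 x l ltac:(lra) ltac:(lra)).
  replace (F x l + G x l - (F x0 l0 + G x0 l0)) with ((F x l - F x0 l0) + (G x l - G x0 l0)) by ring.
  eapply Rle_lt_trans. apply Rabs_triang. lra.
Qed.

Lemma JC_opp F x0 l0 : JC F x0 l0 -> JC (fun x l => - F x l) x0 l0.
Proof.
  intros HF eps He. destruct (HF eps He) as [d [Hd H]]. exists d. split; auto.
  intros x l Hx Hl. replace (- F x l - - F x0 l0) with (- (F x l - F x0 l0)) by ring.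
  rewrite Rabs_Ropp. auto.
Qed.

Lemma JC_mult F G x0 l0 : JC F x0 l0 -> JC G x0 l0 -> JC (fun x l => F x l * G x l) x0 l0.
Proof.
  intros HF HG eps He.
  set (a := Rabs (F x0 l0)). set (b := Rabs (G x0 l0)).
  assert (Ha : 0 <= a) by apply Rabs_pos. assert (Hb : 0 <= b) by apply Rabs_pos.
  set (e1 := Rmin 1 (eps / (2 * (b + 1)))).
  set (e2 := Rmin 1 (eps / (2 * (a + 1)))).
  assert (He1 : 0 < e1) by (apply Rmin_pos; [lra| apply Rdiv_lt_0_compat; lra]).
  assert (He2 : 0 < e2) by (apply Rmin_pos; [lra| apply Rdiv_lt_0_compat; lra]).
  destruct (HF e1 He1) as [d1 [Hd1 H1]]. destruct (HG e2 He2) as [d2 [Hd2 H2]].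
  exists (Rmin d1 d2). split. apply Rmin_pos; auto. intros x l Hx Hl.
  pose proof (Rmin_l d1 d2). pose proof (Rmin_r d1 d2).
  specialize (H1 x l ltac:(lra) ltac:(lra)). specialize (H2 x l ltac:(lra) ltac:(lra)).
  replace (F x l * G x l - F x0 l0 * G x0 l0) with ((F x l - F x0 l0) * G x l + F x0 l0 * (G x l - G x0 l0)) by ring.
  eapply Rle_lt_trans. apply Rabs_triang. rewrite !Rabs_mult. fold a.
  assert (HGb : Rabs (G x l) <= b + 1).
  { replace (G x l) with (G x0 l0 + (G x l - G x0 l0)) by ring.
    eapply Rle_trans. apply Rabs_triang. fold b. pose proof (Rmin_l 1 (eps / (2 * (a + 1)))). fold e2 in H3. lra. }
  assert (E1 : e1 * (b + 1) <= eps / 2).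
  { pose proof (Rmin_r 1 (eps / (2 * (b + 1)))). fold e1 in H3.
    apply Rle_trans with (eps / (2 * (b + 1)) * (b + 1)). apply Rmult_le_compat_r; lra.
    right. field. lra. }
  assert (E2 : a * e2 <= eps / 2).
  { pose proof (Rmin_r 1 (eps / (2 * (a + 1)))). fold e2 in H3.
    apply Rle_trans with ((a + 1) * (eps / (2 * (a + 1)))). apply Rmult_le_compat; lra.
    right. field. lra. }
  pose proof (Rabs_pos (F x l - F x0 l0)). pose proof (Rabs_pos (G x l)). pose proof (Rabs_pos (G x l - G x0 l0)).
  assert (Rabs (F x l - F x0 l0) * Rabs (G x l) < eps / 2).
  { apply Rle_lt_trans with (Rabs (F x l - F x0 l0) * (b + 1)). apply Rmult_le_compat_l; lra.
    apply Rlt_le_trans with (e1 * (b + 1)). apply Rmult_lt_compat_r; lra. lra. }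
  assert (a * Rabs (G x l - G x0 l0) <= eps / 2).
  { apply Rle_trans with (a * e2). apply Rmult_le_compat_l; lra. lra. }
  lra.
Qed.

Lemma JC_comp (G : R -> R) F x0 l0 : JC F x0 l0 -> continuity_pt G (F x0 l0) ->
  JC (fun x l => G (F x l)) x0 l0.
Proof.
  intros HF HG eps He. destruct (cont_eps G _ HG eps He) as [d1 [Hd1 H1]].
  destruct (HF d1 Hd1) as [d [Hd H]]. exists d. split; [exact Hd|]. intros x l Hx Hl.
  apply H1. apply H; auto.
Qed.

Lemma JC_x x0 l0 : JC (fun x l => x) x0 l0.
Proof. intros eps He. exists eps. split; auto. Qed.

Lemma JC_l (f : R -> R) x0 l0 : continuity_pt f l0 -> JC (fun x l => f l) x0 l0.
Proof.
  intros Hf eps He. destruct (cont_eps f _ Hf eps He) as [d [Hd H]]. exists d. split; auto.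
Qed.

Lemma JC_ext F G x0 l0 : l0 < 1 -> (forall x l, l < 1 -> F x l = G x l) -> JC G x0 l0 -> JC F x0 l0.
Proof.
  intros Hl0 Heq HG eps He. destruct (HG eps He) as [d [Hd H]].
  exists (Rmin d (1 - l0)). split. apply Rmin_pos; lra. intros x l Hx Hl.
  pose proof (Rmin_l d (1 - l0)). pose proof (Rmin_r d (1 - l0)).
  assert (l < 1) by (apply Rabs_lt_between in Hl; lra).
  rewrite !Heq by auto. apply H; lra.
Qed.

Lemma kk_cont l0 : l0 < 1 -> continuity_pt kk l0.
Proof.
  intros Hl. apply (isd_cont_pt kk l0 (- / (2 * sqrt (1 - l0)))). unfold kk.
  auto_derive. lra. replace (1 + - l0) with (1 - l0) by ring. field. apply Rgt_not_eq. apply sqrt_lt_R0. lra.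
Qed.

Lemma kk_mono l1 l2 : l1 <= l2 -> l2 < 1 -> kk l2 <= kk l1.
Proof. intros H1 H2. unfold kk. apply sqrt_le_1_alt. lra. Qed.

Definition m0 (l0 : R) := kk ((1 + l0) / 2).

Lemma m0_pos l0 : l0 < 1 -> 0 < m0 l0.
Proof. intros H. unfold m0. apply kk_pos. lra. Qed.

Lemma m0_le l0 l : l0 < 1 -> Rabs (l - l0) < (1 - l0) / 2 -> l < 1 /\ m0 l0 <= kk l.
Proof.
  intros H1 H2. apply Rabs_lt_between in H2. split. lra. unfold m0. apply kk_mono; lra.
Qed.

Lemma JC_gen (p : R) (v : R -> R -> R) (F : (R -> R -> R) -> R -> R -> R) (L : R) x0 l0 :
  l0 < 1 ->
  (forall x, continuity_pt (F v l0) x) ->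
  (forall l x, Rabs (l - l0) < (1 - l0) / 2 -> Rabs (F v l x - F v l0 x) <= Rabs (kk l - kk l0) * L) ->
  JC (fun x l => F v l x) x0 l0.
Proof.
  intros Hl0 Hc Hlip eps He.
  assert (HL : 0 <= Rabs L) by apply Rabs_pos.
  destruct (cont_eps _ _ (Hc x0) (eps/2) ltac:(lra)) as [d1 [Hd1 H1]].
  destruct (cont_eps _ _ (kk_cont l0 Hl0) (eps / (2 * (Rabs L + 1)))) as [d2 [Hd2 H2]].
  apply Rdiv_lt_0_compat; lra.
  exists (Rmin d1 (Rmin d2 ((1 - l0)/2))). split. repeat apply Rmin_pos; lra.
  intros x l Hx Hl.
  pose proof (Rmin_l d1 (Rmin d2 ((1 - l0)/2))). pose proof (Rmin_r d1 (Rmin d2 ((1 - l0)/2))).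
  pose proof (Rmin_l d2 ((1 - l0)/2)). pose proof (Rmin_r d2 ((1 - l0)/2)).
  replace (F v l x - F v l0 x0) with ((F v l x - F v l0 x) + (F v l0 x - F v l0 x0)) by ring.
  eapply Rle_lt_trans. apply Rabs_triang.
  specialize (H1 x ltac:(lra)). specialize (H2 l ltac:(lra)). specialize (Hlip l x ltac:(lra)).
  assert (Rabs (kk l - kk l0) * L <= eps / 2).
  { apply Rle_trans with (Rabs (kk l - kk l0) * Rabs L). apply Rmult_le_compat_l. apply Rabs_pos. apply Rle_abs.
    apply Rle_trans with (eps / (2 * (Rabs L + 1)) * (Rabs L + 1)).
    apply Rmult_le_compat. apply Rabs_pos. lra. lra. lra. right. field. lra. }
  lra.
Qed.

Lemma exp_cont_pt y : continuity_pt exp y.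
Proof. apply (isd_cont_pt exp y (exp y)). apply is_derive_exp. Qed.

Lemma JC_gg p v x0 l0 : 0 < p -> Hv p v -> l0 < 1 -> JC (fun x l => gg v l x) x0 l0.
Proof.
  intros Hp H Hl0.
  apply (JC_gen p v (fun v l x => gg v l x) (Lg (m0 l0) (cc p / p))); auto.
  - intros x. destruct (sys_inst p v l0 Hp H Hl0) as [_ [Hg _]].
    exact (isd_cont_pt _ _ _ (Hg x)).
  - intros l x Hl. destruct (m0_le l0 l Hl0 Hl) as [Hl1 Hm].
    assert (Hm0 : m0 l0 <= kk l0) by (apply (m0_le l0 l0 Hl0); rewrite Rminus_diag, Rabs_R0; lra).
    apply (g_lip (qq p) (QQ p) (cc p / p) (m0 l0) (kk l) (gg v l) (hh v l) (kk l0) (gg v l0) (hh v l0)); auto.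
    apply qH_inst; auto. apply sys_inst; auto. apply sys_inst; auto. apply m0_pos; auto.
Qed.

Lemma JC_hh p v x0 l0 : 0 < p -> Hv p v -> l0 < 1 -> JC (fun x l => hh v l x) x0 l0.
Proof.
  intros Hp H Hl0.
  apply (JC_gen p v (fun v l x => hh v l x) (Lh (m0 l0) (cc p / p))); auto.
  - intros x. destruct (sys_inst p v l0 Hp H Hl0) as [_ [_ [Hh _]]].
    exact (isd_cont_pt _ _ _ (Hh x)).
  - intros l x Hl. destruct (m0_le l0 l Hl0 Hl) as [Hl1 Hm].
    assert (Hm0 : m0 l0 <= kk l0) by (apply (m0_le l0 l0 Hl0); rewrite Rminus_diag, Rabs_R0; lra).
    apply (h_lip (qq p) (QQ p) (cc p / p) (m0 l0) (kk l) (gg v l) (hh v l) (kk l0) (gg v l0) (hh v l0)); auto.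
    apply qH_inst; auto. apply sys_inst; auto. apply sys_inst; auto. apply m0_pos; auto.
Qed.

Lemma JC_expk x0 l0 : l0 < 1 -> JC (fun x l => exp (- kk l * x)) x0 l0.
Proof.
  intros Hl0. apply (JC_comp exp (fun x l => - kk l * x)).
  apply JC_mult. apply JC_opp. apply JC_l. apply kk_cont; auto. apply JC_x.
  apply exp_cont_pt.
Qed.

Lemma JC_v p v x0 l0 : 0 < p -> Hv p v -> l0 < 1 -> JC (fun x l => v x l) x0 l0.
Proof.
  intros Hp H Hl0. apply (JC_ext _ (fun x l => gg v l x * exp (- kk l * x))); auto.
  intros x l Hl. apply v_eq_g; auto.
  apply JC_mult. apply (JC_gg p); auto. apply JC_expk; auto.
Qed.

Lemma JC_dv p v x0 l0 : 0 < p -> Hv p v -> l0 < 1 -> JC (fun x l => dv v l x) x0 l0.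
Proof.
  intros Hp H Hl0. apply (JC_ext _ (fun x l => hh v l x * exp (- kk l * x) + - (kk l * v x l))); auto.
  intros x l Hl. rewrite dv_eq_h; auto.
  apply JC_plus. apply JC_mult. apply (JC_hh p); auto. apply JC_expk; auto.
  apply JC_opp. apply JC_mult. apply JC_l. apply kk_cont; auto. apply (JC_v p); auto.
Qed.


Definition GG p l := exp (cc p / p / kk l).

Lemma v_bound p v l t : 0 < p -> Hv p v -> l < 1 -> Rabs (v t l) <= GG p l * exp (- kk l * t).
Proof.
  intros Hp H Hl. rewrite v_eq_g by auto. rewrite Rabs_mult, (Rabs_right (exp _)) by (apply Rle_ge; left; apply exp_pos).
  apply Rmult_le_compat_r. left; apply exp_pos.
  apply (g_bound (qq p) (QQ p) (cc p / p) (kk l) (gg v l) (hh v l)). apply qH_inst; auto. apply sys_inst; auto.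
Qed.

Lemma v_cont p v l t : 0 < p -> Hv p v -> l < 1 -> continuous (fun t => v t l) t.
Proof. intros Hp H Hl. apply (isd_cont _ _ _ (v_d1 p v l t H Hl)). Qed.

Lemma RInt_exp A a b : 0 < A -> RInt (fun t => exp (- A * t)) a b = (exp (- A * a) - exp (- A * b)) / A.
Proof.
  intros HA. apply is_RInt_unique.
  replace ((exp (- A * a) - exp (- A * b)) / A) with
    (minus ((fun t => - exp (- A * t) / A) b) ((fun t => - exp (- A * t) / A) a))
    by (unfold minus, plus, opp; simpl; field; lra).
  apply (is_RInt_derive (V := R_CompleteNormedModule) (fun t => - exp (- A * t) / A) (fun t => exp (- A * t)) a b).
  - intros x _. auto_derive; auto. field. lra.
  - intros x _. apply (isd_cont _ _ _ (isd_explin0 (-A) x)).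
Qed.

Lemma exp_small A eps : 0 < A -> 0 < eps -> exists M, 0 <= M /\ forall X, M <= X -> exp (- A * X) <= eps.
Proof.
  intros HA He. exists (Rmax 0 (/ (A * eps))). split. apply Rmax_l. intros X HX.
  pose proof (Rmax_l 0 (/ (A * eps))). pose proof (Rmax_r 0 (/ (A * eps))).
  assert (HX2 : / (A * eps) <= X) by lra.
  assert (HAX : 1 / eps <= A * X).
  { apply (Rmult_le_compat_l A) in HX2; [|lra]. replace (A * / (A * eps)) with (1 / eps) in HX2 by (field; lra). lra. }
  pose proof (exp_ineq1_le (A * X)).
  assert (E : exp (- A * X) * exp (A * X) = 1) by (rewrite <- exp_plus; replace (- A * X + A * X) with 0 by ring; apply exp_0).
  pose proof (exp_pos (- A * X)).
  assert (1 / eps <= exp (A * X)) by lra.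
  assert (eps * (1 / eps) = 1) by (field; lra).
  assert (1 <= eps * exp (A * X)) by (apply Rle_trans with (eps * (1/eps)); [lra|apply Rmult_le_compat_l; lra]).
  apply Rle_trans with (exp (- A * X) * (eps * exp (A * X))).
  rewrite <- (Rmult_1_r (exp (- A * X))) at 1. apply Rmult_le_compat_l; lra.
  replace (exp (- A * X) * (eps * exp (A * X))) with (eps * (exp (- A * X) * exp (A * X))) by ring.
  rewrite E. lra.
Qed.

Definition Tb p l mu a := GG p l * GG p mu * exp (- (kk l + kk mu) * a) / (kk l + kk mu).

Lemma tail_bound p v l mu a b : 0 < p -> Hv p v -> l < 1 -> mu < 1 -> a <= b ->
  Rabs (RInt (fun t => v t l * v t mu) a b) <= Tb p l mu a.
Proof.
  intros Hp H Hl Hmu Hab. pose proof (kk_pos l Hl). pose proof (kk_pos mu Hmu).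
  eapply Rle_trans. apply (RInt_abs_bound _ (fun t => (GG p l * GG p mu) * exp (- (kk l + kk mu) * t))); auto.
  - intros; apply cont_mult; apply (v_cont p); auto.
  - intros; apply cont_mult. apply cont_const. apply (isd_cont _ _ _ (isd_explin0 _ x)).
  - intros t _. rewrite Rabs_mult.
    replace (GG p l * GG p mu * exp (- (kk l + kk mu) * t)) with
      ((GG p l * exp (- kk l * t)) * (GG p mu * exp (- kk mu * t))).
    apply Rmult_le_compat; try apply Rabs_pos; apply (v_bound p); auto.
    replace (- (kk l + kk mu) * t) with (- kk l * t + - kk mu * t) by ring. rewrite exp_plus. ring.
  - rewrite RInt_scal'. rewrite RInt_exp by lra. unfold Tb.
    assert (0 < GG p l * GG p mu) by (unfold GG; apply Rmult_lt_0_compat; apply exp_pos).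
    pose proof (exp_pos (- (kk l + kk mu) * b)).
    unfold Rdiv. rewrite <- Rmult_assoc. apply Rmult_le_compat_r. left; apply Rinv_0_lt_compat; lra.
    apply Rmult_le_compat_l; lra.
    intros; apply (isd_cont _ _ _ (isd_explin0 _ x)).
Qed.

Lemma Tb_small p l mu eps : 0 < p -> l < 1 -> mu < 1 -> 0 < eps ->
  exists M, 0 <= M /\ forall X, M <= X -> Tb p l mu X <= eps.
Proof.
  intros Hp Hl Hmu He. pose proof (kk_pos l Hl). pose proof (kk_pos mu Hmu).
  set (C := GG p l * GG p mu / (kk l + kk mu)).
  assert (HC : 0 < C) by (unfold C, GG; apply Rdiv_lt_0_compat; [apply Rmult_lt_0_compat; apply exp_pos|lra]).
  destruct (exp_small (kk l + kk mu) (eps / C)) as [M [HM0 HM]]; [lra|apply Rdiv_lt_0_compat; lra|].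
  exists M. split; auto. intros X HX. specialize (HM X HX).
  unfold Tb. replace (GG p l * GG p mu * exp (- (kk l + kk mu) * X) / (kk l + kk mu)) with (C * exp (- (kk l + kk mu) * X)) by (unfold C; field; lra).
  apply Rle_trans with (C * (eps / C)). apply Rmult_le_compat_l; lra. right; field; lra.
Qed.

Definition Jf (v : R -> R -> R) x l mu : R := real (Lim (fun X => RInt (fun t => v t l * v t mu) x X) p_infty).

Lemma RInt_chasles' (f : R -> R) a b c : (forall x, continuous f x) ->
  RInt f a c - RInt f a b = RInt f b c.
Proof.
  intros Hf. rewrite <- (RInt_Chasles f a b c); try (apply ex_RInt_cont; auto).
  unfold plus; simpl. ring.
Qed.

Lemma J_lim p v x l mu : 0 < p -> Hv p v -> l < 1 -> mu < 1 ->
  is_lim (fun X => RInt (fun t => v t l * v t mu) x X) p_infty (Jf v x l mu).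
Proof.
  intros Hp H Hl Hmu.
  set (f := fun X => RInt (fun t => v t l * v t mu) x X).
  assert (Hfc : forall t, continuous (fun t => v t l * v t mu) t) by (intros; apply cont_mult; apply (v_cont p); auto).
  assert (Hex : exists y, filterlim f (Rbar_locally p_infty) (locally y)).
  { apply (filterlim_locally_cauchy (F := Rbar_locally p_infty)).
    intros eps. destruct (Tb_small p l mu (eps/2) Hp Hl Hmu) as [M [HM0 HM]]. destruct eps; simpl; lra.
    exists (fun X => M <= X). split. exists M. intros; lra.
    intros u w Hu Hw. change (Rabs (f w - f u) < eps).
    unfold f. rewrite RInt_chasles' by auto.
    destruct (Rle_dec u w) as [Huw|Huw].
    - eapply Rle_lt_trans. apply (tail_bound p); auto. eapply Rle_lt_trans. apply HM; auto.
      destruct eps; simpl; lra.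
    - rewrite <- (opp_RInt_swap _ w u) by (apply ex_RInt_cont; auto).
      change (Rabs (- RInt (fun t => v t l * v t mu) w u) < eps). rewrite Rabs_Ropp.
      eapply Rle_lt_trans. apply (tail_bound p); auto; lra. eapply Rle_lt_trans. apply HM; auto.
      destruct eps; simpl; lra. }
  destruct Hex as [y Hy].
  assert (Hl' : is_lim f p_infty y) by exact Hy.
  unfold Jf. fold f. rewrite (is_lim_unique _ _ _ Hl'). simpl. exact Hl'.
Qed.

Lemma J_tail p v x l mu X : 0 < p -> Hv p v -> l < 1 -> mu < 1 -> x <= X ->
  Rabs (Jf v x l mu - RInt (fun t => v t l * v t mu) x X) <= Tb p l mu X.
Proof.
  intros Hp H Hl Hmu HxX.
  assert (Hfc : forall t, continuous (fun t => v t l * v t mu) t) by (intros; apply cont_mult; apply (v_cont p); auto).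
  pose proof (J_lim p v x l mu Hp H Hl Hmu) as HJ. apply is_lim_spec in HJ. unfold is_lim' in HJ.
  apply (lim_le_gen _ (Tb p l mu X) X
     (fun Y => Rabs (Jf v x l mu - RInt (fun t => v t l * v t mu) x Y) + Tb p l mu X)).
  - intros Y HY.
    replace (Jf v x l mu - RInt (fun t => v t l * v t mu) x X) with
      ((Jf v x l mu - RInt (fun t => v t l * v t mu) x Y) + (RInt (fun t => v t l * v t mu) x Y - RInt (fun t => v t l * v t mu) x X)) by ring.
    eapply Rle_trans. apply Rabs_triang. apply Rplus_le_compat_l.
    rewrite RInt_chasles' by auto. apply (tail_bound p); auto.
  - intros eps He. destruct (HJ (mkposreal eps He)) as [M HM]. exists (M + 1). intros Y HY.
    specialize (HM Y ltac:(lra)). simpl in HM. rewrite Rabs_minus_sym. lra.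
Qed.


Lemma eq_of_small a b : (forall eps, 0 < eps -> Rabs (a - b) <= eps) -> a = b.
Proof.
  intros H. destruct (Req_dec a b) as [E|E]; auto.
  assert (0 < Rabs (a - b)) by (apply Rabs_pos_lt; lra).
  specialize (H (Rabs (a - b) / 2) ltac:(lra)). lra.
Qed.

Lemma dv_bound_ev p v l : 0 < p -> Hv p v -> l < 1 ->
  exists M, forall X, M <= X -> Rabs (dv v l X) <= (1 + kk l * GG p l) * exp (- kk l * X).
Proof.
  intros Hp H Hl.
  destruct (h_to_0 (qq p) (QQ p) (cc p / p) (kk l) (gg v l) (hh v l) (qH_inst p Hp) (sys_inst p v l Hp H Hl) 1 Rlt_0_1) as [M HM].
  exists M. intros X HX. rewrite dv_eq_h by auto.
  pose proof (kk_pos l Hl). pose proof (exp_pos (- kk l * X)).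
  eapply Rle_trans. apply Rabs_triang. rewrite Rabs_Ropp, !Rabs_mult.
  rewrite (Rabs_right (exp _)) by lra. rewrite (Rabs_right (kk l)) by lra.
  pose proof (v_bound p v l X Hp H Hl). pose proof (HM X HX).
  assert (Rabs (hh v l X) * exp (- kk l * X) <= 1 * exp (- kk l * X)) by (apply Rmult_le_compat_r; lra).
  assert (kk l * Rabs (v X l) <= kk l * (GG p l * exp (- kk l * X))) by (apply Rmult_le_compat_l; lra).
  lra.
Qed.

Lemma wronskian p v x l mu : 0 < p -> Hv p v -> l < 1 -> mu < 1 ->
  v x l * dv v mu x - dv v l x * v x mu = (mu - l) * Jf v x l mu.
Proof.
  intros Hp H Hl Hmu.
  set (W := fun y => v y l * dv v mu y - dv v l y * v y mu).
  set (P := fun t => v t l * v t mu).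
  assert (HPc : forall t, continuous P t) by (intros; apply cont_mult; apply (v_cont p); auto).
  assert (HW : forall X, W x = W X - (l - mu) * RInt P x X).
  { intros X.
    assert (E : (fun y => W y - (l - mu) * RInt P x y) x = (fun y => W y - (l - mu) * RInt P x y) X).
    { apply (const_of_deriv0 (fun y => W y - (l - mu) * RInt P x y) x X). intros y _. eapply isd_eq.
      - apply isd_minus. unfold W. apply isd_minus.
        apply isd_mult. apply (v_d1 p); auto. apply (v_d2 p); auto.
        apply isd_mult. apply (v_d2 p); auto. apply (v_d1 p); auto.
        apply (is_derive_scal (fun y => RInt P x y)). apply RInt_deriv_upper; auto.
      - unfold P. ring. }
    simpl in E. rewrite RInt_point in E. unfold zero in E; simpl in E. lra. }
  change (W x = (mu - l) * Jf v x l mu).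
  pose proof (kk_pos l Hl). pose proof (kk_pos mu Hmu).
  destruct (dv_bound_ev p v l Hp H Hl) as [M1 HM1]. destruct (dv_bound_ev p v mu Hp H Hmu) as [M2 HM2].
  set (C := GG p l * (1 + kk mu * GG p mu) + (1 + kk l * GG p l) * GG p mu).
  assert (HC : 0 < C).
  { unfold C. assert (0 < GG p l) by apply exp_pos.
    assert (0 < GG p mu) by apply exp_pos.
    assert (0 < GG p l * (1 + kk mu * GG p mu)) by (apply Rmult_lt_0_compat; nra).
    assert (0 < (1 + kk l * GG p l) * GG p mu) by (apply Rmult_lt_0_compat; nra). lra. }
  apply eq_of_small. intros eps He.
  destruct (exp_small (kk l + kk mu) (eps / 2 / C)) as [M3 [_ HM3]]. lra. apply Rdiv_lt_0_compat; lra.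
  destruct (Tb_small p l mu (eps / 2 / (Rabs (l - mu) + 1)) Hp Hl Hmu) as [M4 [_ HM4]].
  apply Rdiv_lt_0_compat. lra. pose proof (Rabs_pos (l - mu)); lra.
  set (X := Rmax (Rmax M1 M2) (Rmax (Rmax M3 M4) x)).
  assert (HX1 : M1 <= X /\ M2 <= X /\ M3 <= X /\ M4 <= X /\ x <= X).
  { unfold X. pose proof (Rmax_l (Rmax M1 M2) (Rmax (Rmax M3 M4) x)).
    pose proof (Rmax_r (Rmax M1 M2) (Rmax (Rmax M3 M4) x)).
    pose proof (Rmax_l M1 M2). pose proof (Rmax_r M1 M2).
    pose proof (Rmax_l (Rmax M3 M4) x). pose proof (Rmax_r (Rmax M3 M4) x).
    pose proof (Rmax_l M3 M4). pose proof (Rmax_r M3 M4). lra. }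
  destruct HX1 as [HX1 [HX2 [HX3 [HX4 HX5]]]].
  rewrite (HW X).
  replace (W X - (l - mu) * RInt P x X - (mu - l) * Jf v x l mu) with
    (W X + (l - mu) * (Jf v x l mu - RInt P x X)) by ring.
  eapply Rle_trans. apply Rabs_triang. rewrite Rabs_mult.
  assert (HWX : Rabs (W X) <= eps / 2).
  { unfold W. eapply Rle_trans. apply Rabs_triang. rewrite Rabs_Ropp, !Rabs_mult.
    pose proof (v_bound p v l X Hp H Hl). pose proof (v_bound p v mu X Hp H Hmu).
    specialize (HM1 X HX1). specialize (HM2 X HX2). specialize (HM3 X HX3).
    pose proof (exp_pos (- kk l * X)). pose proof (exp_pos (- kk mu * X)).
    assert (E : exp (- (kk l + kk mu) * X) = exp (- kk l * X) * exp (- kk mu * X)).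
    { rewrite <- exp_plus. f_equal. ring. }
    assert (Rabs (v X l) * Rabs (dv v mu X) <= GG p l * (1 + kk mu * GG p mu) * exp (- (kk l + kk mu) * X)).
    { rewrite E. replace (GG p l * (1 + kk mu * GG p mu) * (exp (- kk l * X) * exp (- kk mu * X))) with
        ((GG p l * exp (- kk l * X)) * ((1 + kk mu * GG p mu) * exp (- kk mu * X))) by ring.
      apply Rmult_le_compat; auto; apply Rabs_pos. }
    assert (Rabs (dv v l X) * Rabs (v X mu) <= (1 + kk l * GG p l) * GG p mu * exp (- (kk l + kk mu) * X)).
    { rewrite E. replace ((1 + kk l * GG p l) * GG p mu * (exp (- kk l * X) * exp (- kk mu * X))) with
        (((1 + kk l * GG p l) * exp (- kk l * X)) * (GG p mu * exp (- kk mu * X))) by ring.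
      apply Rmult_le_compat; auto; apply Rabs_pos. }
    assert (HCe : C * exp (- (kk l + kk mu) * X) <= eps / 2).
    { apply Rle_trans with (C * (eps / 2 / C)). apply Rmult_le_compat_l; lra. right; field; lra. }
    unfold C in HCe. lra. }
  assert (HJX : Rabs (l - mu) * Rabs (Jf v x l mu - RInt P x X) <= eps / 2).
  { pose proof (J_tail p v x l mu X Hp H Hl Hmu HX5) as HJT. fold P in HJT. specialize (HM4 X HX4).
    pose proof (Rabs_pos (l - mu)).
    apply Rle_trans with (Rabs (l - mu) * (eps / 2 / (Rabs (l - mu) + 1))).
    apply Rmult_le_compat_l; lra.
    apply Rle_trans with ((Rabs (l - mu) + 1) * (eps / 2 / (Rabs (l - mu) + 1))).
    apply Rmult_le_compat_r. apply Rlt_le, Rdiv_lt_0_compat; lra. lra. right; field; lra. }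
  lra.
Qed.


Lemma J_ge p v x l X : 0 < p -> Hv p v -> l < 1 -> x <= X ->
  RInt (fun t => v t l * v t l) x X <= Jf v x l l.
Proof.
  intros Hp H Hl HxX. set (P := fun t => v t l * v t l).
  assert (HPc : forall t, continuous P t) by (intros; apply cont_mult; apply (v_cont p); auto).
  pose proof (J_lim p v x l l Hp H Hl Hl) as HJ. apply is_lim_spec in HJ. unfold is_lim' in HJ.
  apply Rnot_lt_le. intros Hlt.
  destruct (HJ (mkposreal _ (proj2 (Rlt_0_minus _ _) Hlt))) as [M HM]. simpl in HM.
  set (Y := Rmax (M + 1) X).
  specialize (HM Y ltac:(unfold Y; pose proof (Rmax_l (M+1) X); lra)).
  assert (HY : X <= Y) by apply Rmax_r.
  assert (RInt P x X <= RInt P x Y).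
  { pose proof (RInt_chasles' P x X Y HPc).
    assert (0 <= RInt P X Y). apply RInt_ge_0; auto. apply ex_RInt_cont; auto.
    intros; unfold P; apply Rle_0_sqr. lra. }
  fold P in HM. apply Rabs_lt_between in HM. lra.
Qed.

Lemma J_pos p v x l : 0 < p -> Hv p v -> l < 1 -> 0 < Jf v x l l.
Proof.
  intros Hp H Hl. destruct (sys_inst p v l Hp H Hl) as [_ [_ [_ Hgl]]].
  destruct (Hgl (1/2) ltac:(lra)) as [M HM].
  set (a := Rmax x M).
  set (P := fun t => v t l * v t l).
  assert (HPc : forall t, continuous P t) by (intros; apply cont_mult; apply (v_cont p); auto).
  assert (Hpos : forall t, a <= t -> 0 < P t).
  { intros t Ht. specialize (HM t ltac:(unfold a in Ht; pose proof (Rmax_r x M); lra)).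
    apply Rabs_le_between in HM. unfold P. rewrite (v_eq_g v l t Hl).
    pose proof (exp_pos (- kk l * t)). assert (0 < gg v l t) by lra.
    assert (0 < gg v l t * exp (- kk l * t)) by (apply Rmult_lt_0_compat; auto). nra. }
  assert (Hxa : x <= a) by apply Rmax_l.
  eapply Rlt_le_trans. 2: apply (J_ge p v x l (a + 1)); auto; lra.
  fold P. pose proof (RInt_chasles' P x a (a + 1) HPc).
  assert (0 <= RInt P x a). apply RInt_ge_0; auto. apply ex_RInt_cont; auto.
  intros; unfold P; apply Rle_0_sqr.
  assert (0 < RInt P a (a + 1)). apply RInt_gt_0. lra. intros; apply Hpos; lra. intros; auto.
  lra.
Qed.


Definition Kx (l0 : R) := kk (l0 - (1 - l0) / 2).
Definition Gm (p l0 : R) := exp (cc p / p / m0 l0).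

Lemma near_l p l0 l : 0 < p -> l0 < 1 -> Rabs (l - l0) < (1 - l0) / 2 ->
  l < 1 /\ m0 l0 <= kk l /\ kk l <= Kx l0 /\ GG p l <= Gm p l0.
Proof.
  intros Hp Hl0 Hl. destruct (m0_le l0 l Hl0 Hl) as [Hl1 Hm]. split; auto. split; auto.
  apply Rabs_lt_between in Hl. split.
  - unfold Kx. apply kk_mono; lra.
  - unfold GG, Gm. apply exp_le_mono'. unfold Rdiv. apply Rmult_le_compat_l.
    apply Rmult_le_pos. unfold cc; nra. left; apply Rinv_0_lt_compat; lra.
    apply Rinv_le_contravar. apply m0_pos; auto. auto.
Qed.

Lemma v_ub p v l0 l t T : 0 < p -> Hv p v -> l0 < 1 -> Rabs (l - l0) < (1 - l0) / 2 -> Rabs t <= T ->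
  Rabs (v t l) <= Gm p l0 * exp (Kx l0 * T).
Proof.
  intros Hp H Hl0 Hl Ht. destruct (near_l p l0 l Hp Hl0 Hl) as [Hl1 [Hm [HK HG]]].
  pose proof (m0_pos l0 Hl0).
  eapply Rle_trans. apply (v_bound p v l t Hp H Hl1). apply Rmult_le_compat.
  left; apply exp_pos. left; apply exp_pos. auto. apply exp_le_mono'.
  pose proof (Rle_abs (-t)). rewrite Rabs_Ropp in H1.
  apply Rle_trans with (kk l * Rabs t). nra. apply Rmult_le_compat; try lra. apply Rabs_pos.
Qed.

Lemma v_lipT p v l0 l t T : 0 < p -> Hv p v -> l0 < 1 -> Rabs (l - l0) < (1 - l0) / 2 -> Rabs t <= T ->
  Rabs (v t l - v t l0) <= Rabs (kk l - kk l0) * ((Lg (m0 l0) (cc p / p) + Gm p l0 * T) * exp (Kx l0 * T)).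
Proof.
  intros Hp H Hl0 Hl Ht. destruct (near_l p l0 l Hp Hl0 Hl) as [Hl1 [Hm [HK HG]]].
  assert (Hl0' : Rabs (l0 - l0) < (1 - l0) / 2) by (rewrite Rminus_diag, Rabs_R0; lra).
  destruct (near_l p l0 l0 Hp Hl0 Hl0') as [_ [Hm0 [HK0 HG0]]].
  pose proof (m0_pos l0 Hl0).
  rewrite (v_eq_g v l t Hl1), (v_eq_g v l0 t Hl0).
  replace (gg v l t * exp (- kk l * t) - gg v l0 t * exp (- kk l0 * t)) with
    ((gg v l t - gg v l0 t) * exp (- kk l * t) + gg v l0 t * (exp (- kk l * t) - exp (- kk l0 * t))) by ring.
  eapply Rle_trans. apply Rabs_triang. rewrite !Rabs_mult.
  rewrite (Rabs_right (exp _)) by (apply Rle_ge; left; apply exp_pos).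
  pose proof (g_lip (qq p) (QQ p) (cc p / p) (m0 l0) (kk l) (gg v l) (hh v l) (kk l0) (gg v l0) (hh v l0)
     (qH_inst p Hp) (sys_inst p v l Hp H Hl1) (sys_inst p v l0 Hp H Hl0) H0 Hm Hm0 t) as HgL.
  pose proof (g_bound (qq p) (QQ p) (cc p / p) (kk l0) (gg v l0) (hh v l0) (qH_inst p Hp) (sys_inst p v l0 Hp H Hl0) t) as Hgb.
  fold (GG p l0) in Hgb.
  pose proof (Rle_abs (-t)). rewrite Rabs_Ropp in H1. pose proof (Rabs_pos t).
  assert (HE1 : exp (- kk l * t) <= exp (Kx l0 * T)).
  { apply exp_le_mono'. apply Rle_trans with (kk l * Rabs t). nra. apply Rmult_le_compat; lra. }
  assert (HE2 : Rabs (exp (- kk l * t) - exp (- kk l0 * t)) <= exp (Kx l0 * T) * (T * Rabs (kk l - kk l0))).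
  { eapply Rle_trans. apply exp_diff_le. apply Rmult_le_compat. left; apply exp_pos. apply Rabs_pos.
    apply exp_le_mono'. apply Rmax_lub.
    apply Rle_trans with (kk l * Rabs t). nra. apply Rmult_le_compat; lra.
    apply Rle_trans with (kk l0 * Rabs t). nra. apply Rmult_le_compat; lra.
    replace (- kk l * t - - kk l0 * t) with (- t * (kk l - kk l0)) by ring.
    rewrite Rabs_mult, Rabs_Ropp. apply Rmult_le_compat_r. apply Rabs_pos. auto. }
  pose proof (Rabs_pos (kk l - kk l0)). pose proof (Rabs_pos (gg v l0 t)).
  pose proof (exp_pos (Kx l0 * T)). pose proof (exp_pos (- kk l * t)).
  assert (Rabs (gg v l t - gg v l0 t) * exp (- kk l * t) <= Rabs (kk l - kk l0) * Lg (m0 l0) (cc p / p) * exp (Kx l0 * T)).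
  { apply Rmult_le_compat; auto. apply Rabs_pos. lra. }
  assert (Rabs (gg v l0 t) * Rabs (exp (- kk l * t) - exp (- kk l0 * t)) <= Gm p l0 * (exp (Kx l0 * T) * (T * Rabs (kk l - kk l0)))).
  { apply Rmult_le_compat; auto. apply Rabs_pos. lra. }
  replace (Rabs (kk l - kk l0) * ((Lg (m0 l0) (cc p / p) + Gm p l0 * T) * exp (Kx l0 * T))) with
    (Rabs (kk l - kk l0) * Lg (m0 l0) (cc p / p) * exp (Kx l0 * T) + Gm p l0 * (exp (Kx l0 * T) * (T * Rabs (kk l - kk l0)))) by ring.
  lra.
Qed.

Lemma RInt_abs_const (f : R -> R) a b M : (forall x, continuous f x) ->
  (forall t, Rmin a b <= t <= Rmax a b -> Rabs (f t) <= M) -> Rabs (RInt f a b) <= Rabs (b - a) * M.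
Proof.
  intros Hc H. destruct (Rle_dec a b) as [Hab|Hab].
  - rewrite (Rabs_right (b - a)) by lra. apply abs_RInt_le_const; auto. apply ex_RInt_cont; auto.
    intros t Ht. apply H. rewrite Rmin_left, Rmax_right by lra. lra.
  - rewrite <- (opp_RInt_swap f b a) by (apply ex_RInt_cont; auto).
    change (Rabs (- RInt f b a) <= Rabs (b - a) * M). rewrite Rabs_Ropp.
    rewrite (Rabs_left (b - a)) by lra. replace (- (b - a)) with (a - b) by ring.
    apply abs_RInt_le_const; auto. lra. apply ex_RInt_cont; auto.
    intros t Ht. apply H. rewrite Rmin_right, Rmax_left by lra. lra.
Qed.

Lemma Tb_unif p l0 l mu X : 0 < p -> l0 < 1 -> Rabs (l - l0) < (1 - l0) / 2 -> Rabs (mu - l0) < (1 - l0) / 2 ->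
  0 <= X -> Tb p l mu X <= Gm p l0 * Gm p l0 * exp (- (2 * m0 l0) * X) / (2 * m0 l0).
Proof.
  intros Hp Hl0 Hl Hmu HX. destruct (near_l p l0 l Hp Hl0 Hl) as [Hl1 [Hm [HK HG]]].
  destruct (near_l p l0 mu Hp Hl0 Hmu) as [Hmu1 [Hmm [HKm HGm]]].
  pose proof (m0_pos l0 Hl0). unfold Tb. unfold Rdiv.
  pose proof (exp_pos (- (kk l + kk mu) * X)). pose proof (exp_pos (- (2 * m0 l0) * X)).
  assert (0 < GG p l) by apply exp_pos. assert (0 < GG p mu) by apply exp_pos.
  apply Rmult_le_compat. 
  - apply Rmult_le_pos; [apply Rmult_le_pos|]; lra.
  - left; apply Rinv_0_lt_compat; lra.
  - apply Rmult_le_compat. apply Rmult_le_pos; lra. lra. apply Rmult_le_compat; lra.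
    apply exp_le_mono'. nra.
  - apply Rinv_le_contravar; lra.
Qed.

Lemma J_cont p v x0 l0 : 0 < p -> Hv p v -> l0 < 1 ->
  forall eps, 0 < eps -> exists d, 0 < d /\ forall x l mu,
    Rabs (x - x0) < d -> Rabs (l - l0) < d -> Rabs (mu - l0) < d ->
    Rabs (Jf v x l mu - Jf v x0 l0 l0) < eps.
Proof.
  intros Hp H Hl0 eps He.
  set (r := (1 - l0) / 2). assert (Hr : 0 < r) by (unfold r; lra).
  set (m := m0 l0). assert (Hm : 0 < m) by (apply m0_pos; auto).
  set (G := Gm p l0). assert (HG : 0 < G) by apply exp_pos.
  destruct (exp_small (2 * m) (eps / 4 * (2 * m) / (G * G))) as [M [HM0 HM]]. lra.
  apply Rdiv_lt_0_compat; [|nra]. nra.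
  set (X := Rmax M (Rabs x0 + 1)).
  assert (HXM : M <= X) by apply Rmax_l. assert (HXx : Rabs x0 + 1 <= X) by apply Rmax_r.
  pose proof (Rle_abs x0). pose proof (Rabs_pos x0).
  assert (Hx0a : - Rabs x0 <= x0 <= Rabs x0) by (apply Rabs_le_between; lra).
  assert (HTb : forall l mu, Rabs (l - l0) < r -> Rabs (mu - l0) < r -> Tb p l mu X <= eps / 4).
  { intros l mu Hl Hmu. eapply Rle_trans. apply (Tb_unif p l0); auto; unfold r in *; lra.
    fold m G. specialize (HM X HXM).
    apply Rle_trans with (G * G * (eps / 4 * (2 * m) / (G * G)) / (2 * m)).
    unfold Rdiv. apply Rmult_le_compat_r. left; apply Rinv_0_lt_compat; lra.
    apply Rmult_le_compat_l. nra. exact HM. right. field. split; lra. }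
  set (T := Rabs x0 + 1 + X).
  set (B := G * exp (Kx l0 * T)).
  assert (HB : 0 < B) by (apply Rmult_lt_0_compat; auto; apply exp_pos).
  set (C1 := (Lg m (cc p / p) + G * T) * exp (Kx l0 * T)).
  assert (HC1 : 0 <= C1).
  { unfold C1. apply Rmult_le_pos; [|left; apply exp_pos].
    assert (0 <= Lg m (cc p / p)).
    { unfold Lg. pose proof (exp_pos (cc p / p / m)). assert (0 <= cc p / p) by (unfold cc, Rdiv; apply Rmult_le_pos; [nra|left; apply Rinv_0_lt_compat; lra]).
      unfold Rdiv. apply Rmult_le_pos; [|lra]. apply Rmult_le_pos. apply Rmult_le_pos; lra.
      left; apply Rinv_0_lt_compat; nra. }
    unfold T. nra. }
  set (W := (X - x0) * B * C1 * 2 + 1).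
  assert (HW : 1 <= W) by (unfold W; assert (0 <= X - x0) by lra; assert (0 <= (X - x0) * B * C1) by (apply Rmult_le_pos; [apply Rmult_le_pos|]; lra); lra).
  destruct (cont_eps kk l0 (kk_cont l0 Hl0) (eps / (6 * W))) as [d2 [Hd2 Hk]].
  apply Rdiv_lt_0_compat; lra.
  set (d1 := eps / (6 * (B * B + 1))).
  assert (Hd1 : 0 < d1) by (unfold d1; apply Rdiv_lt_0_compat; nra).
  exists (Rmin (Rmin 1 r) (Rmin d1 d2)). split. repeat apply Rmin_pos; lra.
  intros x l mu Hx Hl Hmu.
  pose proof (Rmin_l (Rmin 1 r) (Rmin d1 d2)). pose proof (Rmin_r (Rmin 1 r) (Rmin d1 d2)).
  pose proof (Rmin_l 1 r). pose proof (Rmin_r 1 r). pose proof (Rmin_l d1 d2). pose proof (Rmin_r d1 d2).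
  assert (Hl' : Rabs (l - l0) < r) by lra. assert (Hmu' : Rabs (mu - l0) < r) by lra.
  assert (Hl00 : Rabs (l0 - l0) < r) by (rewrite Rminus_diag, Rabs_R0; lra).
  destruct (near_l p l0 l Hp Hl0 Hl') as [Hl1 _]. destruct (near_l p l0 mu Hp Hl0 Hmu') as [Hmu1 _].
  apply Rabs_lt_between in Hx.
  assert (HxX : x <= X) by lra. assert (Hx0X : x0 <= X) by lra.
  set (P := fun t => v t l * v t mu). set (P0 := fun t => v t l0 * v t l0).
  assert (HPc : forall t, continuous P t) by (intros; apply cont_mult; apply (v_cont p); auto).
  assert (HP0c : forall t, continuous P0 t) by (intros; apply cont_mult; apply (v_cont p); auto).
  pose proof (J_tail p v x l mu X Hp H Hl1 Hmu1 HxX) as HJ1. fold P in HJ1.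
  pose proof (J_tail p v x0 l0 l0 X Hp H Hl0 Hl0 Hx0X) as HJ2. fold P0 in HJ2.
  pose proof (HTb l mu Hl' Hmu'). pose proof (HTb l0 l0 Hl00 Hl00).
  assert (Hmid : Rabs (RInt P x X - RInt P0 x0 X) <= eps / 6 + eps / 6).
  { pose proof (RInt_chasles' P x x0 X HPc) as Ech.
    replace (RInt P x X - RInt P0 x0 X) with (RInt P x x0 + (RInt P x0 X - RInt P0 x0 X)) by lra.
    rewrite RInt_minus' by auto.
    eapply Rle_trans. apply Rabs_triang. apply Rplus_le_compat.
    - eapply Rle_trans. apply (RInt_abs_const P x x0 (B * B)); auto.
      + intros t Ht. unfold P. rewrite Rabs_mult.
        assert (Rabs t <= T).
        { unfold T.
          assert (x0 - 1 < t /\ t < x0 + 1).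
          { split. eapply Rlt_le_trans. 2: apply (proj1 Ht). apply Rmin_glb_lt; lra.
            eapply Rle_lt_trans. apply (proj2 Ht). apply Rmax_lub_lt; lra. }
          apply Rabs_le_between. lra. }
        apply Rmult_le_compat; try apply Rabs_pos; apply (v_ub p v l0); auto.
      + rewrite Rabs_minus_sym. assert (Rabs (x - x0) < d1) by (apply Rabs_lt_between; lra).
        apply Rle_trans with (d1 * (B * B)). apply Rmult_le_compat_r; nra.
        unfold d1. apply Rle_trans with (eps / (6 * (B * B + 1)) * (B * B + 1)).
        apply Rmult_le_compat_l. left; apply Rdiv_lt_0_compat; nra. lra. right; field; nra.
    - eapply Rle_trans. apply (RInt_abs_const _ x0 X (B * C1 * (eps / (6 * W)) * 2)).
      + intros; apply cont_minus; auto.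
      + intros t Ht. rewrite Rmin_left, Rmax_right in Ht by lra.
        assert (HtT : Rabs t <= T) by (unfold T; apply Rabs_le_between; lra).
        unfold P, P0.
        replace (v t l * v t mu - v t l0 * v t l0) with (v t l * (v t mu - v t l0) + v t l0 * (v t l - v t l0)) by ring.
        eapply Rle_trans. apply Rabs_triang. rewrite !Rabs_mult.
        pose proof (v_ub p v l0 l t T Hp H Hl0 Hl' HtT) as U1. pose proof (v_ub p v l0 l0 t T Hp H Hl0 Hl00 HtT) as U2.
        pose proof (v_lipT p v l0 l t T Hp H Hl0 Hl' HtT) as L1. pose proof (v_lipT p v l0 mu t T Hp H Hl0 Hmu' HtT) as L2.
        fold G m B C1 in U1, U2, L1, L2.
        pose proof (Hk l ltac:(lra)) as Hkl. pose proof (Hk mu ltac:(lra)) as Hkmu.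
        set (eta := eps / (6 * W)) in *.
        pose proof (Rabs_pos (kk l - kk l0)). pose proof (Rabs_pos (kk mu - kk l0)).
        assert (A1 : Rabs (v t l) * Rabs (v t mu - v t l0) <= B * (C1 * eta)).
        { apply Rmult_le_compat; try apply Rabs_pos; auto.
          eapply Rle_trans. apply L2. rewrite Rmult_comm. apply Rmult_le_compat_l; lra. }
        assert (A2 : Rabs (v t l0) * Rabs (v t l - v t l0) <= B * (C1 * eta)).
        { apply Rmult_le_compat; try apply Rabs_pos; auto.
          eapply Rle_trans. apply L1. rewrite Rmult_comm. apply Rmult_le_compat_l; lra. }
        lra.
      + assert (0 <= X - x0) by lra. rewrite Rabs_right by lra.
        apply Rle_trans with (((X - x0) * B * C1 * 2) * (eps / (6 * W))). right; ring.
        apply Rle_trans with (W * (eps / (6 * W))). apply Rmult_le_compat_r.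
        left; apply Rdiv_lt_0_compat; lra. unfold W; lra. right; field; lra. }
  replace (Jf v x l mu - Jf v x0 l0 l0) with
    ((Jf v x l mu - RInt P x X) + (RInt P x X - RInt P0 x0 X) + (- (Jf v x0 l0 l0 - RInt P0 x0 X))) by ring.
  eapply Rle_lt_trans. apply Rabs_triang. rewrite Rabs_Ropp.
  eapply Rle_lt_trans. apply Rplus_le_compat_r. apply Rabs_triang.
  lra.
Qed.


Lemma same_sign a b : Rabs (a - b) < Rabs b -> 0 < a * b.
Proof.
  intros H. destruct (Rlt_le_dec 0 b) as [Hb|Hb].
  - rewrite (Rabs_right b) in H by lra. apply Rabs_lt_between in H. nra.
  - destruct (Req_dec b 0) as [->|Hb0]. rewrite Rabs_R0 in H. pose proof (Rabs_pos (a - 0)); lra.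
    rewrite (Rabs_left b) in H by lra. apply Rabs_lt_between in H. nra.
Qed.

Definition BoxP p (v : R -> R -> R) lam1 x1 r delta s :=
  0 < r /\ 0 < delta /\ delta <= (1 - lam1) / 2 /\ s <> 0 /\
  (forall l x, Rabs (l - lam1) < delta -> x1 - r <= x <= x1 + r -> 0 < s * dv v l x) /\
  (forall l, Rabs (l - lam1) < delta -> 0 < s * v (x1 + r) l /\ s * v (x1 - r) l < 0) /\
  0 < p /\ Hv p v /\ lam1 < 1.

Lemma good_lt1 lam1 delta l : delta <= (1 - lam1) / 2 -> Rabs (l - lam1) < delta -> l < 1.
Proof. intros H1 H2. apply Rabs_lt_between in H2. lra. Qed.

Lemma box_mono p v lam1 x1 r delta s l a b : BoxP p v lam1 x1 r delta s -> Rabs (l - lam1) < delta ->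
  x1 - r <= a -> a < b -> b <= x1 + r -> s * v a l < s * v b l.
Proof.
  intros [Hr [Hd [Hd1 [Hs [Hdv [Hends [Hp [H Hl1]]]]]]]] Hl Ha Hab Hb.
  pose proof (good_lt1 _ _ _ Hd1 Hl) as Hl'.
  destruct (MVT_gen (fun x => v x l) a b (dv v l)) as [c [Hc Heq]].
  - intros x _. apply (v_d1 p); auto.
  - intros x _. apply (isd_cont_pt _ _ _ (v_d1 p v l x H Hl')).
  - rewrite Rmin_left in Hc by lra. rewrite Rmax_right in Hc by lra.
    specialize (Hdv l c Hl ltac:(lra)).
    assert (s * (v b l - v a l) = s * dv v l c * (b - a)) by (rewrite Heq; ring).
    assert (0 < s * dv v l c * (b - a)) by (apply Rmult_lt_0_compat; lra). nra.
Qed.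

Lemma box_uniq p v lam1 x1 r delta s l z1 z2 : BoxP p v lam1 x1 r delta s -> Rabs (l - lam1) < delta ->
  x1 - r <= z1 <= x1 + r -> x1 - r <= z2 <= x1 + r -> v z1 l = 0 -> v z2 l = 0 -> z1 = z2.
Proof.
  intros HB Hl H1 H2 E1 E2. destruct (Rtotal_order z1 z2) as [Hlt|[Heq|Hgt]]; auto.
  - pose proof (box_mono p v lam1 x1 r delta s l z1 z2 HB Hl ltac:(lra) Hlt ltac:(lra)). rewrite E1, E2 in H. lra.
  - pose proof (box_mono p v lam1 x1 r delta s l z2 z1 HB Hl ltac:(lra) Hgt ltac:(lra)). rewrite E1, E2 in H. lra.
Qed.

Lemma sign_zero_between p v lam1 x1 r delta s l a b : BoxP p v lam1 x1 r delta s -> Rabs (l - lam1) < delta ->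
  a < b -> s * v a l < 0 -> 0 < s * v b l -> exists z, a < z < b /\ v z l = 0.
Proof.
  intros HB Hl Hab Ha Hb. pose proof HB as [Hr [Hd [Hd1 [Hs [Hdv [Hends [Hp [H Hl1]]]]]]]].
  pose proof (good_lt1 _ _ _ Hd1 Hl) as Hl'.
  destruct (IVT_interv (fun x => s * v x l) a b) as [z [Hz Hvz]]; auto.
  - intros x _. apply (isd_cont_pt _ _ (s * dv v l x)). apply (is_derive_scal (fun x => v x l)). apply (v_d1 p); auto.
  - simpl in Hvz. assert (v z l = 0). { destruct (Rmult_integral _ _ Hvz); auto. lra. }
    exists z. split; auto. split.
    + destruct (Req_dec a z) as [<-|]; [|lra]. rewrite H0 in Ha. lra.
    + destruct (Req_dec z b) as [->|]; [|lra]. rewrite H0 in Hb. lra.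
Qed.

Lemma box_exist p v lam1 x1 r delta s l : BoxP p v lam1 x1 r delta s -> Rabs (l - lam1) < delta ->
  exists z, x1 - r < z < x1 + r /\ v z l = 0.
Proof.
  intros HB Hl. pose proof HB as [Hr [Hd [Hd1 [Hs [Hdv [Hends [Hp [H Hl1]]]]]]]].
  destruct (Hends l Hl). apply (sign_zero_between p v lam1 x1 r delta s l); auto. lra.
Qed.

Lemma box_exists p v lam1 x1 : 0 < p -> Hv p v -> lam1 < 1 ->
  simple_zero (fun x => v x lam1) x1 -> exists r delta s, BoxP p v lam1 x1 r delta s.
Proof.
  intros Hp H Hl1 [_ [Hz Hd]]. set (s := dv v lam1 x1). fold (dv v lam1 x1) in Hd. fold s in Hd.
  assert (Hs : 0 < Rabs s) by (apply Rabs_pos_lt; auto).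
  destruct (JC_dv p v x1 lam1 Hp H Hl1 (Rabs s) Hs) as [da [Hda Hdva]].
  set (r := da / 2).
  assert (Hdv : forall l x, Rabs (l - lam1) < da -> x1 - r <= x <= x1 + r -> 0 < s * dv v l x).
  { intros l x Hl Hx. rewrite Rmult_comm. apply same_sign. apply Hdva; auto.
    apply Rabs_lt_between. unfold r in Hx. lra. }
  assert (Hr : 0 < r) by (unfold r; lra).
  assert (Hl1' : Rabs (lam1 - lam1) < da) by (rewrite Rminus_diag, Rabs_R0; lra).
  assert (HBp : 0 < s * v (x1 + r) lam1 /\ s * v (x1 - r) lam1 < 0).
  { split.
    - destruct (MVT_gen (fun x => v x lam1) x1 (x1 + r) (dv v lam1)) as [c [Hc Heq]].
      + intros x _. apply (v_d1 p); auto.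
      + intros x _. apply (isd_cont_pt _ _ _ (v_d1 p v lam1 x H Hl1)).
      + rewrite Rmin_left in Hc by lra. rewrite Rmax_right in Hc by lra.
        rewrite Hz in Heq. specialize (Hdv lam1 c Hl1' ltac:(lra)).
        replace (v (x1 + r) lam1) with (dv v lam1 c * (x1 + r - x1)) by lra.
        replace (x1 + r - x1) with r by ring. nra.
    - destruct (MVT_gen (fun x => v x lam1) (x1 - r) x1 (dv v lam1)) as [c [Hc Heq]].
      + intros x _. apply (v_d1 p); auto.
      + intros x _. apply (isd_cont_pt _ _ _ (v_d1 p v lam1 x H Hl1)).
      + rewrite Rmin_left in Hc by lra. rewrite Rmax_right in Hc by lra.
        rewrite Hz in Heq. specialize (Hdv lam1 c Hl1' ltac:(lra)).
        replace (v (x1 - r) lam1) with (- (dv v lam1 c * (x1 - (x1 - r)))) by lra.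
        replace (x1 - (x1 - r)) with r by ring. nra. }
  destruct HBp as [Hp1 Hm1].
  assert (Hvp : 0 < Rabs (v (x1 + r) lam1)) by (apply Rabs_pos_lt; intro E; rewrite E in Hp1; lra).
  assert (Hvm : 0 < Rabs (v (x1 - r) lam1)) by (apply Rabs_pos_lt; intro E; rewrite E in Hm1; lra).
  destruct (JC_v p v (x1 + r) lam1 Hp H Hl1 _ Hvp) as [db [Hdb Hb]].
  destruct (JC_v p v (x1 - r) lam1 Hp H Hl1 _ Hvm) as [dc [Hdc Hc]].
  set (delta := Rmin (Rmin da db) (Rmin dc ((1 - lam1) / 2))).
  pose proof (Rmin_l (Rmin da db) (Rmin dc ((1 - lam1) / 2))). pose proof (Rmin_r (Rmin da db) (Rmin dc ((1 - lam1) / 2))).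
  pose proof (Rmin_l da db). pose proof (Rmin_r da db). pose proof (Rmin_l dc ((1 - lam1) / 2)). pose proof (Rmin_r dc ((1 - lam1) / 2)).
  fold delta in H0, H1.
  exists r, delta, s. refine (conj Hr (conj _ (conj _ (conj _ (conj _ (conj _ (conj Hp (conj H Hl1)))))))).
  - unfold delta. repeat apply Rmin_pos; lra.
  - lra.
  - intro E. rewrite E in Hs. rewrite Rabs_R0 in Hs. lra.
  - intros l x Hl Hx. apply Hdv; auto. lra.
  - intros l Hl. split.
    + assert (Hpp : 0 < v (x1 + r) l * v (x1 + r) lam1).
      { apply same_sign. apply Hb. rewrite Rminus_diag, Rabs_R0; lra. lra. }
      assert (0 < s * v (x1 + r) lam1 * (v (x1 + r) l * v (x1 + r) lam1)) by (apply Rmult_lt_0_compat; auto).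
      destruct (Rlt_le_dec 0 (s * v (x1 + r) l)) as [Ok|Bad]; auto.
      assert (s * v (x1 + r) l * (v (x1 + r) lam1 * v (x1 + r) lam1) <= 0).
      { apply Rmult_le_0_r; auto. apply Rle_0_sqr. }
      nra.
    + assert (Hpp : 0 < v (x1 - r) l * v (x1 - r) lam1).
      { apply same_sign. apply Hc. rewrite Rminus_diag, Rabs_R0; lra. lra. }
      destruct (Rlt_le_dec (s * v (x1 - r) l) 0) as [Ok|Bad]; auto.
      assert (0 <= s * v (x1 - r) l * (v (x1 - r) lam1 * v (x1 - r) lam1)).
      { apply Rmult_le_pos; auto. apply Rle_0_sqr. }
      assert (s * v (x1 - r) lam1 * (v (x1 - r) l * v (x1 - r) lam1) < 0).
      { assert (0 < - (s * v (x1 - r) lam1) * (v (x1 - r) l * v (x1 - r) lam1)) by (apply Rmult_lt_0_compat; lra). lra. }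
      nra.
Qed.


Definition x0f (v : R -> R -> R) x1 r := fun l => epsilon (inhabits 0) (fun z => x1 - r < z < x1 + r /\ v z l = 0).

Lemma x0_spec p v lam1 x1 r delta s l : BoxP p v lam1 x1 r delta s -> Rabs (l - lam1) < delta ->
  x1 - r < x0f v x1 r l < x1 + r /\ v (x0f v x1 r l) l = 0.
Proof.
  intros HB Hl. unfold x0f. apply epsilon_spec. apply (box_exist p v lam1 x1 r delta s l HB Hl).
Qed.

Lemma x0_unique p v lam1 x1 r delta s l z : BoxP p v lam1 x1 r delta s -> Rabs (l - lam1) < delta ->
  x1 - r <= z <= x1 + r -> v z l = 0 -> z = x0f v x1 r l.
Proof.
  intros HB Hl Hz Hvz. destruct (x0_spec p v lam1 x1 r delta s l HB Hl) as [H1 H2].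
  apply (box_uniq p v lam1 x1 r delta s l); auto; lra.
Qed.

Lemma sign_transfer s A B : 0 < A * B -> (0 < s * B -> 0 < s * A) /\ (s * B < 0 -> s * A < 0).
Proof.
  intros H. destruct (Rlt_le_dec 0 B) as [HB|HB].
  - assert (0 < A) by (destruct (Rlt_le_dec 0 A); auto; nra).
    split; intros; nra.
  - assert (B < 0) by (destruct (Req_dec B 0) as [->|]; [rewrite Rmult_0_r in H; lra|lra]).
    assert (A < 0) by (destruct (Rlt_le_dec A 0); auto; nra).
    split; intros; nra.
Qed.

Lemma good_near lam1 delta l : Rabs (l - lam1) < delta ->
  forall mu, Rabs (mu - l) < delta - Rabs (l - lam1) -> Rabs (mu - lam1) < delta.
Proof.
  intros Hl mu Hmu. replace (mu - lam1) with ((mu - l) + (l - lam1)) by ring.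
  eapply Rle_lt_trans. apply Rabs_triang. lra.
Qed.

Lemma x0_cont p v lam1 x1 r delta s l : BoxP p v lam1 x1 r delta s -> Rabs (l - lam1) < delta ->
  forall eps, 0 < eps -> exists eta, 0 < eta /\ forall mu, Rabs (mu - l) < eta ->
    Rabs (mu - lam1) < delta /\ Rabs (x0f v x1 r mu - x0f v x1 r l) < eps.
Proof.
  intros HB Hl eps He. pose proof HB as [Hr [Hd [Hd1 [Hs [Hdv [Hends [Hp [H Hl1]]]]]]]].
  pose proof (good_lt1 _ _ _ Hd1 Hl) as Hl'.
  destruct (x0_spec p v lam1 x1 r delta s l HB Hl) as [Hz Hvz].
  set (z0 := x0f v x1 r l) in *.
  set (e := Rmin (eps / 2) (Rmin (z0 - (x1 - r)) (x1 + r - z0) / 2)).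
  assert (He0 : 0 < e) by (unfold e; apply Rmin_pos; [lra|]; apply Rmult_lt_0_compat; [apply Rmin_pos; lra|lra]).
  pose proof (Rmin_l (eps / 2) (Rmin (z0 - (x1 - r)) (x1 + r - z0) / 2)).
  pose proof (Rmin_r (eps / 2) (Rmin (z0 - (x1 - r)) (x1 + r - z0) / 2)).
  pose proof (Rmin_l (z0 - (x1 - r)) (x1 + r - z0)). pose proof (Rmin_r (z0 - (x1 - r)) (x1 + r - z0)).
  fold e in H0, H1.
  set (a := z0 - e). set (b := z0 + e).
  assert (Ha : s * v a l < 0).
  { pose proof (box_mono p v lam1 x1 r delta s l a z0 HB Hl ltac:(unfold a; lra) ltac:(unfold a; lra) ltac:(lra)).
    rewrite Hvz in H4. lra. }
  assert (Hb : 0 < s * v b l).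
  { pose proof (box_mono p v lam1 x1 r delta s l z0 b HB Hl ltac:(lra) ltac:(unfold b; lra) ltac:(unfold b; lra)).
    rewrite Hvz in H4. lra. }
  assert (Hva : 0 < Rabs (v a l)) by (apply Rabs_pos_lt; intro E; rewrite E in Ha; lra).
  assert (Hvb : 0 < Rabs (v b l)) by (apply Rabs_pos_lt; intro E; rewrite E in Hb; lra).
  destruct (JC_v p v a l Hp H Hl' _ Hva) as [da [Hda Hja]].
  destruct (JC_v p v b l Hp H Hl' _ Hvb) as [db [Hdb Hjb]].
  assert (Hm : 0 < delta - Rabs (l - lam1)) by lra.
  exists (Rmin (Rmin da db) (delta - Rabs (l - lam1))). split. repeat apply Rmin_pos; lra.
  intros mu Hmu.
  pose proof (Rmin_l (Rmin da db) (delta - Rabs (l - lam1))). pose proof (Rmin_r (Rmin da db) (delta - Rabs (l - lam1))).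
  pose proof (Rmin_l da db). pose proof (Rmin_r da db).
  assert (Hgm : Rabs (mu - lam1) < delta) by (apply (good_near lam1 delta l Hl); lra).
  split; auto.
  assert (Ha' : s * v a mu < 0).
  { apply (sign_transfer s (v a mu) (v a l)); auto. apply same_sign. apply Hja. rewrite Rminus_diag, Rabs_R0; lra. lra. }
  assert (Hb' : 0 < s * v b mu).
  { apply (sign_transfer s (v b mu) (v b l)); auto. apply same_sign. apply Hjb. rewrite Rminus_diag, Rabs_R0; lra. lra. }
  destruct (sign_zero_between p v lam1 x1 r delta s mu a b HB Hgm ltac:(unfold a, b; lra) Ha' Hb') as [z [Hzab Hvz']].
  rewrite <- (x0_unique p v lam1 x1 r delta s mu z HB Hgm ltac:(unfold a, b in Hzab; lra) Hvz').
  apply Rabs_lt_between. unfold a, b in Hzab. lra.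
Qed.

Lemma inv_cont_pt y : y <> 0 -> continuity_pt Rinv y.
Proof. intros Hy. apply (isd_cont_pt Rinv y (- / (y * y))). auto_derive; auto. field; auto. Qed.

Lemma quot_cont A0 B0 C0 : B0 <> 0 -> C0 <> 0 ->
  forall eps, 0 < eps -> exists rho, 0 < rho /\ forall A B C,
    Rabs (A - A0) < rho -> Rabs (B - B0) < rho -> Rabs (C - C0) < rho ->
    Rabs (A / (B * C) - A0 / (B0 * C0)) < eps.
Proof.
  intros HB HC eps He.
  assert (HP : B0 * C0 <> 0) by (apply Rmult_integral_contrapositive; auto).
  assert (J1 : JC (fun x y => x * / y) A0 (B0 * C0)).
  { apply JC_mult. apply JC_x. apply (JC_comp Rinv (fun x y => y)). apply JC_l.
    apply (isd_cont_pt (fun y => y) (B0 * C0) 1). apply (is_derive_id (K := R_AbsRing)).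
    apply inv_cont_pt; auto. }
  destruct (J1 eps He) as [r1 [Hr1 H1]].
  assert (J2 : JC (fun x y => x * y) B0 C0) by (apply JC_mult; [apply JC_x|apply JC_l; apply (isd_cont_pt (fun y => y) C0 1); apply (is_derive_id (K := R_AbsRing))]).
  destruct (J2 r1 Hr1) as [r2 [Hr2 H2]].
  exists (Rmin r1 r2). split. apply Rmin_pos; auto. intros A B C HA HB' HC'.
  pose proof (Rmin_l r1 r2). pose proof (Rmin_r r1 r2).
  apply H1. lra. apply H2; lra.
Qed.


Definition Dx (v : R -> R -> R) x1 r l :=
  Jf v (x0f v x1 r l) l l / (dv v l (x0f v x1 r l) * dv v l (x0f v x1 r l)).

Lemma dv_nz p v lam1 x1 r delta s l x : BoxP p v lam1 x1 r delta s -> Rabs (l - lam1) < delta ->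
  x1 - r <= x <= x1 + r -> dv v l x <> 0.
Proof.
  intros HB Hl Hx E. pose proof HB as [_ [_ [_ [_ [Hdv _]]]]]. specialize (Hdv l x Hl Hx).
  rewrite E, Rmult_0_r in Hdv. lra.
Qed.

Lemma x0_deriv p v lam1 x1 r delta s l : BoxP p v lam1 x1 r delta s -> Rabs (l - lam1) < delta ->
  is_derive (x0f v x1 r) l (Dx v x1 r l).
Proof.
  intros HB Hl. pose proof HB as [Hr [Hd [Hd1 [Hs [Hdv [Hends [Hp [H Hl1]]]]]]]].
  pose proof (good_lt1 _ _ _ Hd1 Hl) as Hl'.
  destruct (x0_spec p v lam1 x1 r delta s l HB Hl) as [Hz Hvz].
  set (z0 := x0f v x1 r l) in *.
  assert (Hd0 : dv v l z0 <> 0) by (apply (dv_nz p v lam1 x1 r delta s); auto; lra).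
  apply is_derive_Reals. intros eps He.
  destruct (quot_cont (Jf v z0 l l) (dv v l z0) (dv v l z0) Hd0 Hd0 eps He) as [rho [Hrho Hq]].
  destruct (J_cont p v z0 l Hp H Hl' rho Hrho) as [e1 [He1 HJ]].
  destruct (JC_dv p v z0 l Hp H Hl' rho Hrho) as [e2 [He2 HD]].
  destruct (x0_cont p v lam1 x1 r delta s l HB Hl (Rmin e1 e2) ltac:(apply Rmin_pos; lra)) as [e3 [He3 Hx0]].
  pose proof (Rmin_l e1 e2). pose proof (Rmin_r e1 e2).
  exists (mkposreal _ (Rmin_pos _ _ (Rmin_pos _ _ He1 He2) He3)). simpl. intros h Hh0 Hh.
  pose proof (Rmin_l (Rmin e1 e2) e3). pose proof (Rmin_r (Rmin e1 e2) e3).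
  set (mu := l + h).
  assert (Hmul : Rabs (mu - l) < e3) by (unfold mu; replace (l + h - l) with h by ring; lra).
  destruct (Hx0 mu Hmul) as [Hgm Hy]. fold z0 in Hy.
  destruct (x0_spec p v lam1 x1 r delta s mu HB Hgm) as [Hyb Hvy].
  set (y := x0f v x1 r mu) in *.
  pose proof (good_lt1 _ _ _ Hd1 Hgm) as Hmu'.
  pose proof (wronskian p v y l mu Hp H Hl' Hmu') as HW. rewrite Hvy, Rmult_0_r, Rminus_0_r in HW.
  destruct (MVT_gen (fun x => v x l) z0 y (dv v l)) as [c [Hc Heq]].
  - intros x _. apply (v_d1 p); auto.
  - intros x _. apply (isd_cont_pt _ _ _ (v_d1 p v l x H Hl')).
  - rewrite Hvz, Rminus_0_r in Heq.
    assert (Hcb : x1 - r <= c <= x1 + r).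
    { split. eapply Rle_trans. 2: apply (proj1 Hc). apply Rmin_glb; lra.
      eapply Rle_trans. apply (proj2 Hc). apply Rmax_lub; lra. }
    assert (Hcz : Rabs (c - z0) <= Rabs (y - z0)).
    { apply Rabs_le_between. apply Rabs_lt_between in Hy. destruct Hc as [Hc1 Hc2].
      unfold Rmin, Rmax in Hc1, Hc2. destruct (Rle_dec z0 y); split; try lra;
      pose proof (Rabs_pos (y - z0)); try (rewrite Rabs_right by lra; lra); (rewrite Rabs_left1 by lra; lra). }
    assert (Hdc : dv v l c <> 0) by (apply (dv_nz p v lam1 x1 r delta s); auto).
    assert (Hdy : dv v mu y <> 0) by (apply (dv_nz p v lam1 x1 r delta s); auto; lra).
    assert (Hquot : (y - z0) / h = Jf v y l mu / (dv v l c * dv v mu y)).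
    { rewrite Heq in HW. replace (mu - l) with h in HW by (unfold mu; ring).
      field_simplify_eq; [|repeat split; auto]. 
      rewrite <- HW. ring. }
    change (Rabs ((y - z0) / h - Dx v x1 r l) < eps). rewrite Hquot. unfold Dx. fold z0.
    apply Hq.
    + apply HJ; try lra. rewrite Rminus_diag, Rabs_R0; lra. unfold mu; replace (l + h - l) with h by ring; lra.
    + replace (dv v l c) with ((fun x l => dv v l x) c l) by reflexivity.
      replace (dv v l z0) with ((fun x l => dv v l x) z0 l) by reflexivity.
      apply HD. lra. rewrite Rminus_diag, Rabs_R0; lra.
    + replace (dv v mu y) with ((fun x l => dv v l x) y mu) by reflexivity.
      replace (dv v l z0) with ((fun x l => dv v l x) z0 l) by reflexivity.
      apply HD. lra. unfold mu; replace (l + h - l) with h by ring; lra.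
Qed.


Lemma Derive_x0 p v lam1 x1 r delta s l : BoxP p v lam1 x1 r delta s -> Rabs (l - lam1) < delta ->
  Derive (x0f v x1 r) l = Dx v x1 r l.
Proof. intros HB Hl. apply is_derive_unique. apply (x0_deriv p v lam1 x1 r delta s); auto. Qed.

Lemma Dx_cont p v lam1 x1 r delta s l : BoxP p v lam1 x1 r delta s -> Rabs (l - lam1) < delta ->
  forall eps, 0 < eps -> exists eta, 0 < eta /\ forall mu, Rabs (mu - l) < eta ->
    Rabs (mu - lam1) < delta /\ Rabs (Dx v x1 r mu - Dx v x1 r l) < eps.
Proof.
  intros HB Hl eps He. pose proof HB as [Hr [Hd [Hd1 [Hs [Hdv [Hends [Hp [H Hl1]]]]]]]].
  pose proof (good_lt1 _ _ _ Hd1 Hl) as Hl'.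
  destruct (x0_spec p v lam1 x1 r delta s l HB Hl) as [Hz Hvz].
  set (z0 := x0f v x1 r l) in *.
  assert (Hd0 : dv v l z0 <> 0) by (apply (dv_nz p v lam1 x1 r delta s); auto; lra).
  destruct (quot_cont (Jf v z0 l l) (dv v l z0) (dv v l z0) Hd0 Hd0 eps He) as [rho [Hrho Hq]].
  destruct (J_cont p v z0 l Hp H Hl' rho Hrho) as [e1 [He1 HJ]].
  destruct (JC_dv p v z0 l Hp H Hl' rho Hrho) as [e2 [He2 HD]].
  destruct (x0_cont p v lam1 x1 r delta s l HB Hl (Rmin e1 e2) ltac:(apply Rmin_pos; lra)) as [e3 [He3 Hx0]].
  pose proof (Rmin_l e1 e2). pose proof (Rmin_r e1 e2).
  exists (Rmin (Rmin e1 e2) e3). split. repeat apply Rmin_pos; lra. intros mu Hmu.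
  pose proof (Rmin_l (Rmin e1 e2) e3). pose proof (Rmin_r (Rmin e1 e2) e3).
  destruct (Hx0 mu ltac:(lra)) as [Hgm Hy]. split; auto. fold z0 in Hy.
  unfold Dx. fold z0. set (y := x0f v x1 r mu) in *.
  apply Hq.
  - apply HJ; lra.
  - replace (dv v mu y) with ((fun x l => dv v l x) y mu) by reflexivity.
    replace (dv v l z0) with ((fun x l => dv v l x) z0 l) by reflexivity. apply HD; lra.
  - replace (dv v mu y) with ((fun x l => dv v l x) y mu) by reflexivity.
    replace (dv v l z0) with ((fun x l => dv v l x) z0 l) by reflexivity. apply HD; lra.
Qed.

Lemma cont_of_eps (f : R -> R) t :
  (forall eps, 0 < eps -> exists eta, 0 < eta /\ forall y, Rabs (y - t) < eta -> Rabs (f y - f t) < eps) ->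
  continuous f t.
Proof.
  intros H. apply continuity_pt_filterlim. apply continuity_pt_locally. intros eps.
  destruct (H eps (cond_pos eps)) as [eta [Heta H2]]. exists (mkposreal eta Heta). intros y Hy. apply H2. exact Hy.
Qed.

Lemma crossing (f : R -> R) a b x1 r : 0 < r ->
  (forall t, Rmin a b <= t <= Rmax a b -> continuity_pt f t) ->
  Rabs (f a - x1) < r -> r <= Rabs (f b - x1) ->
  exists t, Rmin a b <= t <= Rmax a b /\ (f t = x1 + r \/ f t = x1 - r).
Proof.
  intros Hr Hc Ha Hb.
  set (g := fun t => (f t - x1) * (f t - x1) - r * r).
  assert (Hg : forall t, g t = 0 -> f t = x1 + r \/ f t = x1 - r).
  { intros t Ht. unfold g in Ht. assert ((f t - x1 - r) * (f t - x1 + r) = 0) by (rewrite <- Ht; ring).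
    destruct (Rmult_integral _ _ H); [left|right]; lra. }
  assert (Hga : g a < 0).
  { unfold g. pose proof (Rabs_pos (f a - x1)). assert (Rabs (f a - x1) * Rabs (f a - x1) < r * r) by nra.
    rewrite <- Rabs_mult, Rabs_right in H0 by (apply Rle_ge; apply Rle_0_sqr). lra. }
  assert (Hgb : 0 <= g b).
  { unfold g. assert (r * r <= Rabs (f b - x1) * Rabs (f b - x1)) by nra.
    rewrite <- Rabs_mult, Rabs_right in H by (apply Rle_ge; apply Rle_0_sqr). lra. }
  assert (Hab : a <> b) by (intro E; subst; lra).
  assert (Hgc : forall t, Rmin a b <= t <= Rmax a b -> continuity_pt g t).
  { intros t Ht. unfold g. apply continuity_pt_minus. apply continuity_pt_mult;
    apply continuity_pt_minus; auto; apply continuity_pt_const; intros ? ?; reflexivity.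
    apply continuity_pt_const; intros ? ?; reflexivity. }
  destruct (Req_dec (g b) 0) as [E|E].
  - exists b. split. split; [apply Rmin_r|apply Rmax_r]. auto.
  - destruct (Rlt_le_dec a b) as [Hlt|Hle].
    + destruct (IVT_interv g a b) as [t [Ht Hgt]]; auto.
      * intros t Ht. apply Hgc. rewrite Rmin_left, Rmax_right by lra. auto.
      * lra.
      * exists t. rewrite Rmin_left, Rmax_right by lra. auto.
    + destruct (IVT_interv (fun t => - g t) b a) as [t [Ht Hgt]]; auto.
      * intros t Ht. apply continuity_pt_opp. apply Hgc. rewrite Rmin_right, Rmax_left by lra. auto.
      * lra.
      * lra.
      * lra.
      * exists t. rewrite Rmin_right, Rmax_left by lra. split; auto. apply Hg. lra.
Qed.


Theorem lemma5p3 (p : R) (v : R -> R -> R) (lam1 x1 : R) :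
  0 < p ->
  (forall lam, lam < 1 ->
     solves_ode p lam (fun x => v x lam) /\
     normalized_at_pinfty lam (fun x => v x lam)) ->
  lam1 < 1 ->
  simple_zero (fun x => v x lam1) x1 ->
  exists (delta : R) (x0 : R -> R),
    0 < delta /\ lam1 + delta <= 1 /\
    C1_on x0 (lam1 - delta) (lam1 + delta) /\
    (forall lam, lam1 - delta < lam < lam1 + delta ->
       simple_zero (fun x => v x lam) (x0 lam)) /\
    x0 lam1 = x1 /\
    0 < Derive x0 lam1 /\
    (forall (delta' : R) (y : R -> R),
       0 < delta' ->
       C1_on y (lam1 - delta') (lam1 + delta') ->
       y lam1 = x1 ->
       (forall lam, lam1 - delta' < lam < lam1 + delta' ->
          simple_zero (fun x => v x lam) (y lam)) ->
       forall lam, lam1 - Rmin delta delta' < lam < lam1 + Rmin delta delta' ->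
          y lam = x0 lam).
Proof.
  intros Hp Hall Hl1 Hsz.
  assert (H : Hv p v) by exact Hall.
  destruct (box_exists p v lam1 x1 Hp H Hl1 Hsz) as [r [delta [s HB]]].
  pose proof HB as [Hr [Hd [Hd1 [Hs [Hdv [Hends _]]]]]].
  assert (Hgood : forall l, lam1 - delta < l < lam1 + delta -> Rabs (l - lam1) < delta).
  { intros l Hl. apply Rabs_lt_between. lra. }
  assert (Hl1g : Rabs (lam1 - lam1) < delta) by (rewrite Rminus_diag, Rabs_R0; lra).
  exists delta, (x0f v x1 r).
  split; [exact Hd|]. split; [lra|].
  split; [|split; [|split; [|split]]].
  - intros t Ht. pose proof (Hgood t Ht) as Hg. split.
    + exists (Dx v x1 r t). apply (x0_deriv p v lam1 x1 r delta s); auto.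
    + apply cont_of_eps. intros eps He.
      destruct (Dx_cont p v lam1 x1 r delta s t HB Hg eps He) as [eta [Heta HD]].
      exists eta. split; auto. intros y Hy. destruct (HD y Hy) as [Hgy HDy].
      rewrite (Derive_x0 p v lam1 x1 r delta s y HB Hgy), (Derive_x0 p v lam1 x1 r delta s t HB Hg). auto.
  - intros l Hl. pose proof (Hgood l Hl) as Hg. pose proof (good_lt1 _ _ _ Hd1 Hg) as Hl'.
    destruct (x0_spec p v lam1 x1 r delta s l HB Hg) as [Hz Hvz].
    split; [|split; auto].
    + exists (dv v l (x0f v x1 r l)). apply (v_d1 p); auto.
    + change (dv v l (x0f v x1 r l) <> 0). apply (dv_nz p v lam1 x1 r delta s); auto; lra.
  - symmetry. apply (x0_unique p v lam1 x1 r delta s lam1 x1 HB Hl1g). lra.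
    destruct Hsz as [_ [Hz _]]. exact Hz.
  - rewrite (Derive_x0 p v lam1 x1 r delta s lam1 HB Hl1g). unfold Dx.
    assert (Hd0 : dv v lam1 (x0f v x1 r lam1) <> 0).
    { destruct (x0_spec p v lam1 x1 r delta s lam1 HB Hl1g) as [Hz _].
      apply (dv_nz p v lam1 x1 r delta s); auto; lra. }
    apply Rdiv_lt_0_compat. apply (J_pos p); auto.
    assert (0 < dv v lam1 (x0f v x1 r lam1) * dv v lam1 (x0f v x1 r lam1)).
    { destruct (Rlt_le_dec 0 (dv v lam1 (x0f v x1 r lam1))); [nra|]. 
      assert (dv v lam1 (x0f v x1 r lam1) < 0) by lra. nra. }
    auto.
  - intros delta' y Hd' Hy Hy1 Hyz l Hl.
    pose proof (Rmin_l delta delta'). pose proof (Rmin_r delta delta').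
    assert (Hg : Rabs (l - lam1) < delta) by (apply Rabs_lt_between; lra).
    pose proof (good_lt1 _ _ _ Hd1 Hg) as Hl'.
    destruct (Hyz l ltac:(lra)) as [_ [Hvy _]].
    destruct (Rlt_le_dec (Rabs (y l - x1)) r) as [Hin|Hout].
    + apply (x0_unique p v lam1 x1 r delta s l (y l) HB Hg); auto.
      apply Rabs_lt_between in Hin. lra.
    + exfalso.
      destruct (crossing y lam1 l x1 r Hr) as [t [Ht Hyt]].
      * intros t Ht. assert (Htt : lam1 - delta' < t < lam1 + delta').
        { split. eapply Rlt_le_trans. 2: apply (proj1 Ht). apply Rmin_glb_lt; lra.
          eapply Rle_lt_trans. apply (proj2 Ht). apply Rmax_lub_lt; lra. }
        destruct (Hy t Htt) as [[dy Hdy] _]. apply (isd_cont_pt y t dy Hdy).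
      * rewrite Hy1. unfold Rminus. rewrite Rplus_opp_r, Rabs_R0. lra.
      * auto.
      * assert (Htt : lam1 - Rmin delta delta' < t < lam1 + Rmin delta delta').
        { split. eapply Rlt_le_trans. 2: apply (proj1 Ht). apply Rmin_glb_lt; lra.
          eapply Rle_lt_trans. apply (proj2 Ht). apply Rmax_lub_lt; lra. }
        assert (Hgt : Rabs (t - lam1) < delta) by (apply Rabs_lt_between; lra).
        destruct (Hyz t ltac:(lra)) as [_ [Hvt _]].
        destruct (Hends t Hgt) as [E1 E2].
        destruct Hyt as [Ey|Ey]; rewrite Ey in Hvt; rewrite Hvt in *; lra.
Qed.
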